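(* Let the data $\eta,Q_g,Q_p,\Psi,c_{max},\theta_s,S$ be as in the context. Then there exists at least one $c\in[c_{max},0]$ for which the interface problem (P$_c$) described in the context admits a solution $\theta$, and every such $c$ lies in the open interval $(c_{max},0)$.
   Context: Dimensionless travelling-wave formulation of a solid-propellant combustion model ($x<0$ inert solid, $x>0$ gas, interface at $x=0$; $\theta$ dimensionless temperature; $c<0$ dimensionless regression velocity). Data: $\eta>0$; the gas reaction heat $Q_g>0$ and the pyrolysis heat $Q_p\in\mathbb R$ with $Q_p>-Q_g$; $\Psi:[0,1]\to[0,\infty)$ of class $C^\infty$ with $\Psi(\theta)>0$ for $\theta\in[0,1)$ and $\Psi(1)=0$; a number $c_{max}<0$ and a surface-temperature map $\theta_s:[c_{max},0]\to[0,1]$ (inverse of a pyrolysis law with cut-off at the initial temperature) that is continuous and strictly decreasing with $\theta_s(0)=0$, $\theta_s(c_{max})=1$, and $C^\infty$ on $[c_{max},0)$ with $\theta_s'(c)<0$ there. Define $S(c):=\eta\,\frac{Q_p}{Q_p+Q_g}\,c$. For $c\in[c_{max},0]$, problem (P$_c$) asks for $\theta:\mathbb R\to[0,1]$, continuous, of class $C^2$ on $(-\infty,0]$ and on $[0,\infty)$ (one-sided derivatives at $0$), such that $\theta''+c\theta'=0$ for $x<0$; $\theta''+\eta c\theta'=-\Psi(\theta)$ for $x>0$; $\theta(x)\to0$ as $x\to-\infty$, $\theta(0)=\theta_s(c)$, $\theta(x)\to1$ as $x\to+\infty$, $\theta'(x)\to0$ as $x\to\pm\infty$; and the interface heat balance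 $\theta'(0^+)-\eta\,\theta'(0^-)=S(c)$. *)

(* Defs.v *)
From Stdlib Require Import Reals.
From Coquelicot Require Import Coquelicot.
Open Scope R_scope.

(* For an interior point
   this is the usual derivative, at an endpoint of an interval it is the
   one-sided derivative. *)
Definition deriv_within (P : R -> Prop) (f : R -> R) (x l : R) : Prop :=
  filterlim (fun y => (f y - f x) / (y - x))
    (within (fun y => P y /\ y <> x) (locally x)) (locally l).

Definition cont_within (P : R -> Prop) (f : R -> R) (x : R) : Prop :=
  filterlim f (within P (locally x)) (locally (f x)).

Definition C2_on (P : R -> Prop) (f d1 d2 : R -> R) : Prop :=
  forall x, P x ->
    deriv_within P f x (d1 x) /\ deriv_within P d1 x (d2 x) /\
    cont_within P d2 x.

Definition Cinf_on (P : R -> Prop) (f : R -> R) : Prop :=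
  exists D : nat -> R -> R,
    (forall x, P x -> D O x = f x) /\
    (forall n x, P x -> deriv_within P (D n) x (D (S n) x)).

Definition Sfun (eta Qg Qp c : R) : R := eta * (Qp / (Qp + Qg)) * c.

Definition solves_Pc (eta Qg Qp : R) (Psi thetas : R -> R) (c : R)
    (theta : R -> R) : Prop :=
  (forall x, 0 <= theta x <= 1) /\
  (forall x, continuous theta x) /\
  exists dl1 dl2 dr1 dr2 : R -> R,
    C2_on (fun x => x <= 0) theta dl1 dl2 /\
    C2_on (fun x => 0 <= x) theta dr1 dr2 /\
    (forall x, x < 0 -> dl2 x + c * dl1 x = 0) /\
    (forall x, 0 < x -> dr2 x + eta * c * dr1 x = - Psi (theta x)) /\
    filterlim theta (Rbar_locally m_infty) (locally 0) /\
    theta 0 = thetas c /\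
    filterlim theta (Rbar_locally p_infty) (locally 1) /\
    filterlim dl1 (Rbar_locally m_infty) (locally 0) /\
    filterlim dr1 (Rbar_locally p_infty) (locally 0) /\
    dr1 0 - eta * dl1 0 = Sfun eta Qg Qp c.

(* Main.v *)
Require Import Defs.
From Stdlib Require Import Reals Lra Lia Factorial Classical.
From Coquelicot Require Import Coquelicot.
Open Scope R_scope.

Lemma ballR (x e y : R) : ball x e y <-> Rabs (y - x) < e.
Proof. unfold ball; simpl; unfold AbsRing_ball, abs, minus, plus, opp; simpl. tauto. Qed.

Lemma locR (x : R) (P : R -> Prop) :
  locally x P <-> exists d, 0 < d /\ forall y, Rabs (y - x) < d -> P y.
Proof.
  split.
  - intros [d Hd]. exists d. split. apply cond_pos. intros y Hy. apply Hd. apply ballR. exact Hy.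
  - intros [d [Hd H]]. exists (mkposreal d Hd). intros y Hy. apply H. apply ballR. exact Hy.
Qed.

Lemma cont_eps (f : R -> R) (x : R) :
  continuous f x <-> forall e, 0 < e -> exists d, 0 < d /\ forall y, Rabs (y - x) < d -> Rabs (f y - f x) < e.
Proof.
  unfold continuous. rewrite filterlim_locally. split.
  - intros H e He. destruct (proj1 (locR x _) (H (mkposreal e He))) as [d [Hd Hd']].
    exists d. split; [exact Hd|]. intros y Hy. apply Hd'. auto.
  - intros H e. apply locR. destruct (H e (cond_pos e)) as [d [Hd Hd']].
    exists d. split; [exact Hd|]. intros y Hy. apply Hd'. auto.
Qed.

Lemma within_eps (P : R -> Prop) (f : R -> R) (x l : R) :
  filterlim f (within P (locally x)) (locally l) <->
  forall e, 0 < e -> exists d, 0 < d /\ forall y, Rabs (y - x) < d -> P y -> Rabs (f y - l) < e.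
Proof.
  rewrite filterlim_locally. split.
  - intros H e He. destruct (proj1 (locR x _) (H (mkposreal e He))) as [d [Hd Hd']].
    exists d. split; [exact Hd|]. intros y Hy Py. apply Hd'; auto.
  - intros H e. apply locR. destruct (H e (cond_pos e)) as [d [Hd Hd']].
    exists d. split; [exact Hd|]. intros y Hy Py. apply Hd'; auto.
Qed.

Lemma pinf_eps (f : R -> R) (l : R) :
  filterlim f (Rbar_locally p_infty) (locally l) <->
  forall e, 0 < e -> exists M, forall x, M < x -> Rabs (f x - l) < e.
Proof.
  rewrite filterlim_locally. split.
  - intros H e He. destruct (H (mkposreal e He)) as [M HM]. exists M. intros x Hx. apply ballR. apply HM. auto.
  - intros H e. destruct (H e (cond_pos e)) as [M HM]. exists M. intros x Hx. apply ballR. apply HM. auto.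
Qed.

Lemma minf_eps (f : R -> R) (l : R) :
  filterlim f (Rbar_locally m_infty) (locally l) <->
  forall e, 0 < e -> exists M, forall x, x < M -> Rabs (f x - l) < e.
Proof.
  rewrite filterlim_locally. split.
  - intros H e He. destruct (H (mkposreal e He)) as [M HM]. exists M. intros x Hx. apply ballR. apply HM. auto.
  - intros H e. destruct (H e (cond_pos e)) as [M HM]. exists M. intros x Hx. apply ballR. apply HM. auto.
Qed.

Lemma cont_pt (f : R -> R) (x : R) : continuous f x -> continuity_pt f x.
Proof. intros H; apply continuity_pt_filterlim; exact H. Qed.

Lemma derive_cont (f : R -> R) x l : is_derive f x l -> continuous f x.
Proof. intros H. apply (@ex_derive_continuous R_AbsRing R_NormedModule f x). exists l. exact H. Qed.

Lemma deriv_nonneg_mono (f df : R -> R) (a b : R) :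
  a <= b -> (forall x, a <= x <= b -> is_derive f x (df x)) ->
  (forall x, a <= x <= b -> 0 <= df x) -> f a <= f b.
Proof.
  intros Hab Hd Hp.
  destruct (MVT_gen f a b df) as [c [Hc Heq]].
  - intros x Hx. apply Hd. rewrite Rmin_left in Hx by lra. rewrite Rmax_right in Hx by lra. lra.
  - intros x Hx. apply cont_pt. eapply derive_cont. apply Hd. rewrite Rmin_left in Hx by lra. rewrite Rmax_right in Hx by lra. lra.
  - rewrite Rmin_left in Hc by lra. rewrite Rmax_right in Hc by lra.
    assert (0 <= df c * (b - a)) by (apply Rmult_le_pos; [apply Hp; lra| lra]). lra.
Qed.

Lemma deriv_zero_const (f df : R -> R) (a b : R) :
  a <= b -> (forall x, a <= x <= b -> is_derive f x (df x)) ->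
  (forall x, a <= x <= b -> df x = 0) -> f a = f b.
Proof.
  intros Hab Hd H0.
  assert (f a <= f b) by (apply (deriv_nonneg_mono f df); auto; intros x Hx; rewrite H0; lra).
  assert (- f a <= - f b).
  { apply (deriv_nonneg_mono (fun x => - f x) (fun x => - df x)); auto.
    - intros x Hx. apply (is_derive_opp f x (df x)). auto.
    - intros x Hx. rewrite H0; lra. }
  lra.
Qed.

Definition cl (x : R) := Rmax x 0.

Lemma cl_lip x y : Rabs (cl x - cl y) <= Rabs (x - y).
Proof. unfold cl, Rmax. destruct (Rle_dec x 0); destruct (Rle_dec y 0); unfold Rabs; repeat destruct Rcase_abs; lra. Qed.

Lemma cl_cont x : continuous cl x.
Proof. apply cont_eps. intros e He. exists e. split; auto. intros y Hy. eapply Rle_lt_trans. apply cl_lip. auto. Qed.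

Lemma cl_pos x : 0 <= x -> cl x = x.
Proof. intros; unfold cl; rewrite Rmax_left; lra. Qed.
Lemma cl_ge0 x : 0 <= cl x.
Proof. unfold cl; apply Rmax_r. Qed.
Lemma cl_le x : x <= cl x.
Proof. unfold cl; apply Rmax_l. Qed.

Lemma cplus (f g : R -> R) x : continuous f x -> continuous g x -> continuous (fun t => f t + g t) x.
Proof. intros; exact (@continuous_plus R_UniformSpace R_AbsRing R_NormedModule f g x H H0). Qed.
Lemma cminus (f g : R -> R) x : continuous f x -> continuous g x -> continuous (fun t => f t - g t) x.
Proof. intros; exact (@continuous_minus R_UniformSpace R_AbsRing R_NormedModule f g x H H0). Qed.
Lemma cmult (f g : R -> R) x : continuous f x -> continuous g x -> continuous (fun t => f t * g t) x.
Proof. intros; exact (@continuous_mult R_UniformSpace R_AbsRing f g x H H0). Qed.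
Lemma cconst (c : R) (x : R) : continuous (fun _ : R => c) x.
Proof. exact (@continuous_const R_UniformSpace R_UniformSpace c x). Qed.
Lemma cid (x : R) : continuous (fun t : R => t) x.
Proof. exact (@continuous_id R_UniformSpace x). Qed.
Lemma cabs (f : R -> R) x : continuous f x -> continuous (fun t => Rabs (f t)) x.
Proof. intros; apply continuous_Rabs_comp; auto. Qed.
Lemma ccomp (f g : R -> R) x : continuous f x -> continuous g (f x) -> continuous (fun t => g (f t)) x.
Proof. intros; exact (@continuous_comp R_UniformSpace R_UniformSpace R_UniformSpace f g x H H0). Qed.
Lemma cexp (f : R -> R) x : continuous f x -> continuous (fun t => exp (f t)) x.
Proof. intros; apply continuous_exp_comp; auto. Qed.
Lemma cpow (f : R -> R) n x : continuous f x -> continuous (fun t => (f t) ^ n) x.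
Proof. intros H. induction n; simpl. apply cconst. apply cmult; auto. Qed.

Lemma exRI (f : R -> R) a b : (forall t, continuous f t) -> ex_RInt f a b.
Proof. intros H. apply (@ex_RInt_continuous R_CompleteNormedModule). intros; apply H. Qed.

Lemma RInt_gron (L A B : R) (n : nat) (x : R) :
  RInt (fun t => L * (A * exp (L * t) + B * ((L * t) ^ n / INR (fact n)))) 0 x
  = A * (exp (L * x) - 1) + B * ((L * x) ^ (S n) / INR (fact (S n))).
Proof.
  apply is_RInt_unique.
  replace (A * (exp (L * x) - 1) + B * ((L * x) ^ (S n) / INR (fact (S n)))) with
    (minus ((fun t => A * exp (L * t) + B * ((L * t) ^ (S n) / INR (fact (S n)))) x)
           ((fun t => A * exp (L * t) + B * ((L * t) ^ (S n) / INR (fact (S n)))) 0)).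
  2:{ unfold minus, plus, opp; simpl. replace ((L*0)^(S n)) with 0 by (simpl; ring).
      rewrite Rmult_0_r, exp_0. unfold Rdiv. ring. }
  apply (@is_RInt_derive R_CompleteNormedModule
     (fun t => A * exp (L * t) + B * ((L * t) ^ (S n) / INR (fact (S n))))
     (fun t => L * (A * exp (L * t) + B * ((L * t) ^ n / INR (fact n)))) 0 x).
  - intros t _. auto_derive. auto.
    assert (Hm: forall n, match n with 0%nat => 1 | S _ => INR n + 1 end = INR n + 1) by (intros [|m]; simpl; ring).
    rewrite Hm. replace (INR (fact n + n * fact n)) with ((INR n + 1) * INR (fact n)) by (rewrite plus_INR, mult_INR; ring).
    field. split. apply INR_fact_neq_0. pose proof (pos_INR n). lra.
  - intros t _. apply cmult. apply cconst. apply cplus.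
    apply cmult. apply cconst. apply cexp. apply cmult. apply cconst. apply cid.
    apply cmult. apply cconst. apply (cmult (fun t => (L*t)^n) (fun _ => / INR (fact n))).
    apply cpow. apply cmult. apply cconst. apply cid. apply cconst.
Qed.

Lemma int_step (h1 h2 phi : R -> R) (x : R) : 0 <= x ->
  (forall t, continuous h1 t) -> (forall t, continuous h2 t) -> (forall t, continuous phi t) ->
  (forall t, 0 <= t <= x -> Rabs (h1 t) + Rabs (h2 t) <= phi t) ->
  Rabs (RInt h1 0 x) + Rabs (RInt h2 0 x) <= RInt phi 0 x.
Proof.
  intros Hx C1 C2 C3 H.
  assert (E1 := abs_RInt_le h1 0 x Hx (exRI _ _ _ C1)).
  assert (E2 := abs_RInt_le h2 0 x Hx (exRI _ _ _ C2)).
  assert (Ca1 : forall t, continuous (fun t => Rabs (h1 t)) t) by (intros; apply cabs; auto).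
  assert (Ca2 : forall t, continuous (fun t => Rabs (h2 t)) t) by (intros; apply cabs; auto).
  assert (RInt (fun t => Rabs (h1 t)) 0 x + RInt (fun t => Rabs (h2 t)) 0 x = RInt (fun t => Rabs (h1 t) + Rabs (h2 t)) 0 x).
  { symmetry. apply (RInt_plus (V:=R_CompleteNormedModule)); apply exRI; auto. }
  assert (RInt (fun t => Rabs (h1 t) + Rabs (h2 t)) 0 x <= RInt phi 0 x).
  { apply RInt_le; auto. apply exRI; intros; apply cplus; auto. apply exRI; auto.
    intros; apply H; lra. }
  lra.
Qed.

Definition Lip (f g : R -> R -> R) (L : R) :=
  forall a b a' b', Rabs (f a b - f a' b') + Rabs (g a b - g a' b') <= L * (Rabs (a - a') + Rabs (b - b')).

Lemma lip_cont f g L (th v : R -> R) t : 0 < L -> Lip f g L -> continuous th t -> continuous v t ->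
  continuous (fun s => f (th s) (v s)) t /\ continuous (fun s => g (th s) (v s)) t.
Proof.
  intros HL Hl Ct Cv.
  assert (key: forall e, 0 < e -> exists d, 0 < d /\ forall y, Rabs (y - t) < d ->
     Rabs (f (th y) (v y) - f (th t) (v t)) + Rabs (g (th y) (v y) - g (th t) (v t)) < e).
  { intros e He.
    assert (He2 : 0 < e / (2 * L)) by (apply Rdiv_lt_0_compat; lra).
    destruct (proj1 (cont_eps th t) Ct _ He2) as [d1 [Hd1 H1]].
    destruct (proj1 (cont_eps v t) Cv _ He2) as [d2 [Hd2 H2]].
    exists (Rmin d1 d2). split. apply Rmin_pos; auto. intros y Hy.
    eapply Rle_lt_trans. apply Hl.
    assert (Rabs (th y - th t) < e/(2*L)) by (apply H1; eapply Rlt_le_trans; [exact Hy| apply Rmin_l]).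
    assert (Rabs (v y - v t) < e/(2*L)) by (apply H2; eapply Rlt_le_trans; [exact Hy| apply Rmin_r]).
    replace e with (L * (e/(2*L) + e/(2*L))) by (field; lra).
    apply Rmult_lt_compat_l; lra. }
  split; apply cont_eps; intros e He; destruct (key e He) as [d [Hd H]]; exists d; split; auto;
    intros y Hy; specialize (H y Hy).
  - pose proof (Rabs_pos (g (th y) (v y) - g (th t) (v t))). lra.
  - pose proof (Rabs_pos (f (th y) (v y) - f (th t) (v t))). lra.
Qed.

Fixpoint pic (f g : R -> R -> R) (a0 b0 : R) (n : nat) : (R -> R) * (R -> R) :=
  match n with
  | O => (fun _ => a0, fun _ => b0)
  | S m => let p := pic f g a0 b0 m in
     (fun x => a0 + RInt (fun t => f (fst p t) (snd p t)) 0 (cl x),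
      fun x => b0 + RInt (fun t => g (fst p t) (snd p t)) 0 (cl x))
  end.

Lemma RInt_der (h : R -> R) u : (forall t, continuous h t) -> is_derive (fun u => RInt h 0 u) u (h u).
Proof.
  intros H. apply (is_derive_RInt h (fun u => RInt h 0 u) 0 u).
  apply filter_forall. intros b. apply (RInt_correct (V:=R_CompleteNormedModule)). apply exRI; auto. apply H.
Qed.

Lemma RInt_cl_cont (h : R -> R) x : (forall t, continuous h t) -> continuous (fun x => RInt h 0 (cl x)) x.
Proof.
  intros H. apply (ccomp cl (fun u => RInt h 0 u)). apply cl_cont. eapply derive_cont. apply RInt_der; auto.
Qed.

Lemma pic_cont f g L a0 b0 n : 0 < L -> Lip f g L -> forall x,
  continuous (fst (pic f g a0 b0 n)) x /\ continuous (snd (pic f g a0 b0 n)) x.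
Proof.
  intros HL Hl. induction n; intros x; simpl.
  - split; apply cconst.
  - split; apply cplus; try apply cconst; apply RInt_cl_cont; intros t;
      destruct (IHn t); apply (lip_cont f g L); auto.
Qed.

Definition dn f g a0 b0 n x :=
  Rabs (fst (pic f g a0 b0 (S n)) x - fst (pic f g a0 b0 n) x) +
  Rabs (snd (pic f g a0 b0 (S n)) x - snd (pic f g a0 b0 n) x).

Lemma cl_le_X x X : 0 <= X -> x <= X -> cl x <= X.
Proof. intros; unfold cl, Rmax; destruct Rle_dec; lra. Qed.

Lemma pic_bound f g L a0 b0 X : 0 < L -> Lip f g L -> 0 <= X -> forall n x, x <= X ->
  dn f g a0 b0 n x <= (X * (Rabs (f a0 b0) + Rabs (g a0 b0))) * ((L * cl x) ^ n / INR (fact n)).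
Proof.
  intros HL Hl HX n. induction n; intros x Hx.
  - unfold dn. simpl. rewrite !(RInt_const (V:=R_CompleteNormedModule)).
    unfold scal; simpl; unfold mult; simpl.
    replace (a0 + (cl x - 0) * f a0 b0 - a0) with (cl x * f a0 b0) by ring.
    replace (b0 + (cl x - 0) * g a0 b0 - b0) with (cl x * g a0 b0) by ring.
    rewrite !Rabs_mult. rewrite (Rabs_right (cl x)) by (apply Rle_ge, cl_ge0).
    pose proof (cl_le_X x X HX Hx). pose proof (Rabs_pos (f a0 b0)). pose proof (Rabs_pos (g a0 b0)).
    nra.
  - unfold dn.
    set (p1 := pic f g a0 b0 (S n)). set (p0 := pic f g a0 b0 n).
    change (fst (pic f g a0 b0 (S (S n))) x) with (a0 + RInt (fun t => f (fst p1 t) (snd p1 t)) 0 (cl x)).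
    change (snd (pic f g a0 b0 (S (S n))) x) with (b0 + RInt (fun t => g (fst p1 t) (snd p1 t)) 0 (cl x)).
    change (fst p1 x) with (a0 + RInt (fun t => f (fst p0 t) (snd p0 t)) 0 (cl x)).
    change (snd p1 x) with (b0 + RInt (fun t => g (fst p0 t) (snd p0 t)) 0 (cl x)).
    assert (C1 := pic_cont f g L a0 b0 (S n) HL Hl). assert (C0 := pic_cont f g L a0 b0 n HL Hl).
    fold p1 in C1. fold p0 in C0.
    assert (Cf1 : forall t, continuous (fun t => f (fst p1 t) (snd p1 t)) t) by (intros t; destruct (C1 t); apply (lip_cont f g L); auto).
    assert (Cg1 : forall t, continuous (fun t => g (fst p1 t) (snd p1 t)) t) by (intros t; destruct (C1 t); apply (lip_cont f g L); auto).
    assert (Cf0 : forall t, continuous (fun t => f (fst p0 t) (snd p0 t)) t) by (intros t; destruct (C0 t); apply (lip_cont f g L); auto).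
    assert (Cg0 : forall t, continuous (fun t => g (fst p0 t) (snd p0 t)) t) by (intros t; destruct (C0 t); apply (lip_cont f g L); auto).
    replace (a0 + RInt (fun t => f (fst p1 t) (snd p1 t)) 0 (cl x) - (a0 + RInt (fun t => f (fst p0 t) (snd p0 t)) 0 (cl x)))
      with (RInt (fun t => f (fst p1 t) (snd p1 t) - f (fst p0 t) (snd p0 t)) 0 (cl x)).
    2:{ rewrite (RInt_minus (V:=R_CompleteNormedModule)); try (apply exRI; auto). unfold minus, plus, opp; simpl. ring. }
    replace (b0 + RInt (fun t => g (fst p1 t) (snd p1 t)) 0 (cl x) - (b0 + RInt (fun t => g (fst p0 t) (snd p0 t)) 0 (cl x)))
      with (RInt (fun t => g (fst p1 t) (snd p1 t) - g (fst p0 t) (snd p0 t)) 0 (cl x)).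
    2:{ rewrite (RInt_minus (V:=R_CompleteNormedModule)); try (apply exRI; auto). unfold minus, plus, opp; simpl. ring. }
    set (B := X * (Rabs (f a0 b0) + Rabs (g a0 b0))).
    eapply Rle_trans.
    apply (int_step _ _ (fun t => L * (0 * exp (L * t) + B * ((L * t) ^ n / INR (fact n))))).
    + apply cl_ge0.
    + intros t. apply cminus; auto.
    + intros t. apply cminus; auto.
    + intros t. apply cmult. apply cconst. apply cplus. apply cmult. apply cconst. apply cexp. apply cmult. apply cconst. apply cid.
      apply cmult. apply cconst. apply (cmult (fun t => (L*t)^n) (fun _ => / INR (fact n))).
      apply cpow. apply cmult. apply cconst. apply cid. apply cconst.
    + intros t Ht. eapply Rle_trans. apply Hl.
      assert (t <= X) by (pose proof (cl_le_X x X HX Hx); lra).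
      specialize (IHn t H). unfold dn in IHn. fold p1 p0 in IHn. rewrite (cl_pos t) in IHn by lra.
      rewrite Rmult_0_l, Rplus_0_l. apply Rmult_le_compat_l. lra. exact IHn.
    + rewrite RInt_gron. rewrite Rmult_0_l, Rplus_0_l. right; reflexivity.
Qed.

Fixpoint psum (q : nat -> R) (n : nat) : R := match n with O => 0 | S m => psum q m + q m end.
Definition qe (Y : R) (k : nat) := Y ^ k / INR (fact k).

Lemma lim_eps (u : nat -> R) (l : R) :
  is_lim_seq u l <-> forall e, 0 < e -> exists N, forall n, (N <= n)%nat -> Rabs (u n - l) < e.
Proof.
  rewrite <- is_lim_seq_spec. unfold is_lim_seq'. split.
  - intros H e He. destruct (H (mkposreal e He)) as [N HN]. exists N. intros; apply HN; auto.
  - intros H e. destruct (H e (cond_pos e)) as [N HN]. exists N. intros; apply HN; auto.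
Qed.

Lemma psum_lim Y : exists l : R, is_lim_seq (psum (qe Y)) l.
Proof.
  destruct (exist_exp Y) as [l Hl]. exists l. apply is_lim_seq_incr_1. apply is_lim_seq_Reals.
  intros e He. destruct (Hl e He) as [N HN]. exists N. intros n Hn. specialize (HN n Hn).
  replace (psum (qe Y) (S n)) with (sum_f_R0 (fun i => / INR (fact i) * Y ^ i) n). exact HN.
  clear. induction n. cbn [psum sum_f_R0]. unfold qe, Rdiv. ring. cbn [psum sum_f_R0]. cbn [psum] in IHn. rewrite IHn. unfold qe, Rdiv. ring.
Qed.

Lemma qe_nonneg Y k : 0 <= Y -> 0 <= qe Y k.
Proof. intros. unfold qe. apply Rdiv_le_0_compat. apply pow_le; auto. apply lt_0_INR. apply lt_O_fact. Qed.

Lemma psum_mono Y n k : 0 <= Y -> psum (qe Y) n <= psum (qe Y) (n + k).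
Proof. intros HY. induction k. rewrite Nat.add_0_r; lra. rewrite Nat.add_succ_r. simpl. pose proof (qe_nonneg Y (n+k) HY). lra. Qed.

Lemma psum_le_lim Y (l : R) n : 0 <= Y -> is_lim_seq (psum (qe Y)) l -> psum (qe Y) n <= l.
Proof.
  intros HY Hl. assert (H := is_lim_seq_le_loc (fun _ => psum (qe Y) n) (psum (qe Y)) (psum (qe Y) n) l).
  simpl in H. apply H. exists n. intros m Hm. replace m with (n + (m - n))%nat by lia. apply psum_mono; auto.
  apply is_lim_seq_const. auto.
Qed.

Lemma pic_diff f g L a0 b0 X : 0 < L -> Lip f g L -> 0 <= X -> forall n k x, x <= X ->
  Rabs (fst (pic f g a0 b0 (n + k)) x - fst (pic f g a0 b0 n) x) +
  Rabs (snd (pic f g a0 b0 (n + k)) x - snd (pic f g a0 b0 n) x) <=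
  (X * (Rabs (f a0 b0) + Rabs (g a0 b0))) * (psum (qe (L * X)) (n + k) - psum (qe (L * X)) n).
Proof.
  intros HL Hl HX n k x Hx. induction k.
  - rewrite Nat.add_0_r. rewrite !Rminus_diag, Rabs_R0. lra.
  - rewrite Nat.add_succ_r. simpl psum.
    assert (Hd := pic_bound f g L a0 b0 X HL Hl HX (n + k) x Hx). unfold dn in Hd.
    assert ((L * cl x) ^ (n + k) / INR (fact (n + k)) <= qe (L * X) (n + k)).
    { unfold qe. apply Rmult_le_compat_r. left; apply Rinv_0_lt_compat, lt_0_INR, lt_O_fact.
      apply pow_incr. split. apply Rmult_le_pos; [lra| apply cl_ge0]. apply Rmult_le_compat_l; [lra|]. apply cl_le_X; auto. }
    assert (0 <= X * (Rabs (f a0 b0) + Rabs (g a0 b0))) by (apply Rmult_le_pos; auto; pose proof (Rabs_pos (f a0 b0)); pose proof (Rabs_pos (g a0 b0)); lra).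
    set (u := fst (pic f g a0 b0 (S (n + k))) x). set (w := snd (pic f g a0 b0 (S (n + k))) x).
    fold u w in Hd.
    pose proof (Rabs_triang (u - fst (pic f g a0 b0 (n + k)) x) (fst (pic f g a0 b0 (n + k)) x - fst (pic f g a0 b0 n) x)).
    pose proof (Rabs_triang (w - snd (pic f g a0 b0 (n + k)) x) (snd (pic f g a0 b0 (n + k)) x - snd (pic f g a0 b0 n) x)).
    replace (u - fst (pic f g a0 b0 n) x) with ((u - fst (pic f g a0 b0 (n + k)) x) + (fst (pic f g a0 b0 (n + k)) x - fst (pic f g a0 b0 n) x)) by ring.
    replace (w - snd (pic f g a0 b0 n) x) with ((w - snd (pic f g a0 b0 (n + k)) x) + (snd (pic f g a0 b0 (n + k)) x - snd (pic f g a0 b0 n) x)) by ring.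
    nra.
Qed.

Definition solth f g a0 b0 x := real (Lim_seq (fun n => fst (pic f g a0 b0 n) x)).
Definition solv f g a0 b0 x := real (Lim_seq (fun n => snd (pic f g a0 b0 n) x)).

Lemma lim_real (u : nat -> R) : ex_finite_lim_seq u -> is_lim_seq u (real (Lim_seq u)).
Proof. intros [l Hl]. rewrite (is_lim_seq_unique _ _ Hl). simpl. exact Hl. Qed.

Lemma lim_abs (u : nat -> R) (l : R) : is_lim_seq u l -> is_lim_seq (fun n => Rabs (u n)) (Rabs l).
Proof. intros H. exact (is_lim_seq_abs u l H). Qed.

Lemma psum_cauchy Y : forall e, 0 < e -> exists N, forall n k, (N <= n)%nat -> psum (qe Y) (n+k) - psum (qe Y) n < e.
Proof.
  intros e He. destruct (psum_lim Y) as [l Hl].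
  assert (Hc : ex_lim_seq_cauchy (psum (qe Y))) by (apply ex_lim_seq_cauchy_corr; exists l; auto).
  destruct (Hc (mkposreal e He)) as [N HN]. exists N. intros n k Hn.
  specialize (HN (n+k)%nat n ltac:(lia) Hn). simpl in HN.
  pose proof (Rle_abs (psum (qe Y) (n + k) - psum (qe Y) n)). lra.
Qed.

Lemma cauchy_of (u : nat -> R) (B Y : R) : 0 <= B ->
  (forall n k, Rabs (u (n + k)%nat - u n) <= B * (psum (qe Y) (n + k) - psum (qe Y) n)) ->
  ex_finite_lim_seq u.
Proof.
  intros HB H. apply ex_lim_seq_cauchy_corr. intros e.
  assert (He : 0 < e / (B + 1)) by (apply Rdiv_lt_0_compat; [apply cond_pos| lra]).
  destruct (psum_cauchy Y _ He) as [N HN]. exists N. intros n m Hn Hm.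
  assert (key : forall n k, (N <= n)%nat -> Rabs (u (n + k)%nat - u n) < e).
  { intros n' k Hn'. eapply Rle_lt_trans. apply H. specialize (HN n' k Hn').
    assert (B * (psum (qe Y) (n' + k) - psum (qe Y) n') <= B * (e / (B + 1))) by (apply Rmult_le_compat_l; lra).
    assert (B * (e / (B+1)) < e). { apply (Rmult_lt_reg_r (B+1)). lra. field_simplify; try lra. pose proof (cond_pos e). nra. }
    lra. }
  destruct (Compare_dec.le_lt_dec n m).
  - replace m with (n + (m - n))%nat by lia. rewrite Rabs_minus_sym. apply key; auto.
  - replace n with (m + (n - m))%nat by lia. apply key; auto.
Qed.

Lemma pic_conv f g L a0 b0 x : 0 < L -> Lip f g L ->
  is_lim_seq (fun n => fst (pic f g a0 b0 n) x) (solth f g a0 b0 x) /\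
  is_lim_seq (fun n => snd (pic f g a0 b0 n) x) (solv f g a0 b0 x).
Proof.
  intros HL Hl. set (X := cl x). assert (HX : 0 <= X) by apply cl_ge0. assert (Hx : x <= X) by apply cl_le.
  set (B := X * (Rabs (f a0 b0) + Rabs (g a0 b0))).
  assert (HB : 0 <= B) by (apply Rmult_le_pos; auto; pose proof (Rabs_pos (f a0 b0)); pose proof (Rabs_pos (g a0 b0)); lra).
  split; apply lim_real; apply (cauchy_of _ B (L * X)); auto; intros n k;
    pose proof (pic_diff f g L a0 b0 X HL Hl HX n k x Hx) as Hd; fold B in Hd.
  - pose proof (Rabs_pos (snd (pic f g a0 b0 (n + k)) x - snd (pic f g a0 b0 n) x)). lra.
  - pose proof (Rabs_pos (fst (pic f g a0 b0 (n + k)) x - fst (pic f g a0 b0 n) x)). lra.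
Qed.

Lemma pic_unif f g L a0 b0 X : 0 < L -> Lip f g L -> 0 <= X -> forall e, 0 < e -> exists N, forall n x,
  (N <= n)%nat -> x <= X ->
  Rabs (fst (pic f g a0 b0 n) x - solth f g a0 b0 x) + Rabs (snd (pic f g a0 b0 n) x - solv f g a0 b0 x) <= e.
Proof.
  intros HL Hl HX e He.
  set (B := X * (Rabs (f a0 b0) + Rabs (g a0 b0))).
  assert (HB : 0 <= B) by (apply Rmult_le_pos; auto; pose proof (Rabs_pos (f a0 b0)); pose proof (Rabs_pos (g a0 b0)); lra).
  destruct (psum_lim (L * X)) as [l Hlim].
  assert (bnd : forall n x, x <= X ->
    Rabs (fst (pic f g a0 b0 n) x - solth f g a0 b0 x) + Rabs (snd (pic f g a0 b0 n) x - solv f g a0 b0 x)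
    <= B * (l - psum (qe (L * X)) n)).
  { intros n x Hx. destruct (pic_conv f g L a0 b0 x HL Hl) as [C1 C2].
    assert (H := is_lim_seq_le_loc
      (fun m => Rabs (fst (pic f g a0 b0 m) x - fst (pic f g a0 b0 n) x) + Rabs (snd (pic f g a0 b0 m) x - snd (pic f g a0 b0 n) x))
      (fun m => B * (psum (qe (L * X)) m - psum (qe (L * X)) n))
      (Rabs (solth f g a0 b0 x - fst (pic f g a0 b0 n) x) + Rabs (solv f g a0 b0 x - snd (pic f g a0 b0 n) x))
      (B * (l - psum (qe (L * X)) n))).
    simpl in H. rewrite (Rabs_minus_sym (fst _ x)), (Rabs_minus_sym (snd _ x)). apply H.
    - exists n. intros m Hm. replace m with (n + (m - n))%nat by lia. apply pic_diff; auto.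
    - apply is_lim_seq_plus'; apply lim_abs; apply is_lim_seq_minus'; auto; apply is_lim_seq_const.
    - apply is_lim_seq_mult'. apply is_lim_seq_const. apply is_lim_seq_minus'; auto. apply is_lim_seq_const. }
  assert (He' : 0 < e / (B + 1)) by (apply Rdiv_lt_0_compat; lra).
  destruct (proj1 (lim_eps _ _) Hlim _ He') as [N HN]. exists N. intros n x Hn Hx.
  eapply Rle_trans. apply bnd; auto. specialize (HN n Hn).
  pose proof (Rle_abs (l - psum (qe (L * X)) n)). rewrite Rabs_minus_sym in HN.
  assert (B * (l - psum (qe (L * X)) n) <= B * (e / (B + 1))) by (apply Rmult_le_compat_l; lra).
  assert (B * (e / (B+1)) <= e). { apply (Rmult_le_reg_r (B+1)). lra. field_simplify; try lra. }
  lra.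
Qed.

Lemma sol_cont f g L a0 b0 x0 : 0 < L -> Lip f g L ->
  continuous (solth f g a0 b0) x0 /\ continuous (solv f g a0 b0) x0.
Proof.
  intros HL Hl.
  assert (key : forall e, 0 < e -> exists d, 0 < d /\ forall y, Rabs (y - x0) < d ->
     Rabs (solth f g a0 b0 y - solth f g a0 b0 x0) < e /\ Rabs (solv f g a0 b0 y - solv f g a0 b0 x0) < e).
  { intros e He. set (X := cl x0 + 1).
    assert (HX : 0 <= X) by (unfold X; pose proof (cl_ge0 x0); lra).
    assert (He3 : 0 < e / 3) by lra.
    destruct (pic_unif f g L a0 b0 X HL Hl HX (e/3) He3) as [N HN].
    destruct (pic_cont f g L a0 b0 N HL Hl x0) as [C1 C2].
    destruct (proj1 (cont_eps _ _) C1 _ He3) as [d1 [Hd1 H1]].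
    destruct (proj1 (cont_eps _ _) C2 _ He3) as [d2 [Hd2 H2]].
    exists (Rmin 1 (Rmin d1 d2)). split. apply Rmin_pos; [lra| apply Rmin_pos; auto].
    intros y Hy.
    assert (Hy1 : Rabs (y - x0) < 1) by (eapply Rlt_le_trans; [exact Hy| apply Rmin_l]).
    assert (Hyd1 : Rabs (y - x0) < d1) by (eapply Rlt_le_trans; [exact Hy| eapply Rle_trans; [apply Rmin_r| apply Rmin_l]]).
    assert (Hyd2 : Rabs (y - x0) < d2) by (eapply Rlt_le_trans; [exact Hy| eapply Rle_trans; [apply Rmin_r| apply Rmin_r]]).
    assert (yX : y <= X) by (unfold X; pose proof (cl_le x0); pose proof (Rle_abs (y - x0)); lra).
    assert (xX : x0 <= X) by (unfold X; pose proof (cl_le x0); lra).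
    pose proof (HN N y (le_n N) yX) as Uy. pose proof (HN N x0 (le_n N) xX) as Ux.
    specialize (H1 y Hyd1). specialize (H2 y Hyd2).
    set (p := pic f g a0 b0 N) in *.
    pose proof (Rabs_pos (fst p y - solth f g a0 b0 y)). pose proof (Rabs_pos (snd p y - solv f g a0 b0 y)).
    pose proof (Rabs_pos (fst p x0 - solth f g a0 b0 x0)). pose proof (Rabs_pos (snd p x0 - solv f g a0 b0 x0)).
    split.
    - replace (solth f g a0 b0 y - solth f g a0 b0 x0) with
        (-(fst p y - solth f g a0 b0 y) + (fst p y - fst p x0) + (fst p x0 - solth f g a0 b0 x0)) by ring.
      eapply Rle_lt_trans. apply Rabs_triang. eapply Rle_lt_trans. apply Rplus_le_compat_r. apply Rabs_triang.
      rewrite Rabs_Ropp. lra.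
    - replace (solv f g a0 b0 y - solv f g a0 b0 x0) with
        (-(snd p y - solv f g a0 b0 y) + (snd p y - snd p x0) + (snd p x0 - solv f g a0 b0 x0)) by ring.
      eapply Rle_lt_trans. apply Rabs_triang. eapply Rle_lt_trans. apply Rplus_le_compat_r. apply Rabs_triang.
      rewrite Rabs_Ropp. lra. }
  split; apply cont_eps; intros e He; destruct (key e He) as [d [Hd H]]; exists d; split; auto; intros y Hy; apply H; auto.
Qed.

Lemma sol_int f g L a0 b0 x : 0 < L -> Lip f g L ->
  solth f g a0 b0 x = a0 + RInt (fun t => f (solth f g a0 b0 t) (solv f g a0 b0 t)) 0 (cl x) /\
  solv f g a0 b0 x = b0 + RInt (fun t => g (solth f g a0 b0 t) (solv f g a0 b0 t)) 0 (cl x).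
Proof.
  intros HL Hl.
  set (X := cl x). assert (HX : 0 <= X) by apply cl_ge0.
  assert (Cs : forall t, continuous (solth f g a0 b0) t /\ continuous (solv f g a0 b0) t) by (intros; apply (sol_cont f g L); auto).
  assert (Cf : forall t, continuous (fun t => f (solth f g a0 b0 t) (solv f g a0 b0 t)) t) by (intros t; destruct (Cs t); apply (lip_cont f g L); auto).
  assert (Cg : forall t, continuous (fun t => g (solth f g a0 b0 t) (solv f g a0 b0 t)) t) by (intros t; destruct (Cs t); apply (lip_cont f g L); auto).
  destruct (pic_conv f g L a0 b0 x HL Hl) as [L1 L2].
  apply is_lim_seq_incr_1 in L1. apply is_lim_seq_incr_1 in L2.
  assert (Hconv : forall e, 0 < e -> exists N, forall n, (N <= n)%nat ->
     Rabs (RInt (fun t => f (fst (pic f g a0 b0 n) t) (snd (pic f g a0 b0 n) t)) 0 X - RInt (fun t => f (solth f g a0 b0 t) (solv f g a0 b0 t)) 0 X) < e /\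
     Rabs (RInt (fun t => g (fst (pic f g a0 b0 n) t) (snd (pic f g a0 b0 n) t)) 0 X - RInt (fun t => g (solth f g a0 b0 t) (solv f g a0 b0 t)) 0 X) < e).
  { intros e He.
    assert (He' : 0 < e / (L * X + 1)) by (apply Rdiv_lt_0_compat; [lra| pose proof (Rmult_le_pos L X); nra]).
    destruct (pic_unif f g L a0 b0 X HL Hl HX _ He') as [N HN]. exists N. intros n Hn.
    set (p := pic f g a0 b0 n).
    assert (Cp : forall t, continuous (fst p) t /\ continuous (snd p) t) by (intros; apply (pic_cont f g L); auto).
    assert (Cpf : forall t, continuous (fun t => f (fst p t) (snd p t)) t) by (intros t; destruct (Cp t); apply (lip_cont f g L); auto).
    assert (Cpg : forall t, continuous (fun t => g (fst p t) (snd p t)) t) by (intros t; destruct (Cp t); apply (lip_cont f g L); auto).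
    assert (pt : forall t, 0 <= t <= X ->
       Rabs (f (fst p t) (snd p t) - f (solth f g a0 b0 t) (solv f g a0 b0 t)) +
       Rabs (g (fst p t) (snd p t) - g (solth f g a0 b0 t) (solv f g a0 b0 t)) <= L * (e / (L * X + 1))).
    { intros t Ht. eapply Rle_trans. apply Hl. apply Rmult_le_compat_l. lra. apply HN; auto. lra. }
    assert (bd : L * X * (e / (L * X + 1)) < e).
    { apply (Rmult_lt_reg_r (L * X + 1)). pose proof (Rmult_le_pos L X); nra. field_simplify; try (pose proof (Rmult_le_pos L X); nra). }
    split.
    - rewrite <- (RInt_minus (V:=R_CompleteNormedModule)); try (apply exRI; auto).
      eapply Rle_lt_trans. apply (abs_RInt_le_const _ 0 X (L * (e / (L * X + 1)))); auto.
      apply exRI. intros t. apply cminus; auto.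
      intros t Ht. pose proof (pt t Ht). pose proof (Rabs_pos (g (fst p t) (snd p t) - g (solth f g a0 b0 t) (solv f g a0 b0 t))).
      unfold minus, plus, opp; simpl. unfold Rminus in *. lra. replace ((X - 0) * (L * (e / (L * X + 1)))) with (L * X * (e / (L * X + 1))) by ring; exact bd.
    - rewrite <- (RInt_minus (V:=R_CompleteNormedModule)); try (apply exRI; auto).
      eapply Rle_lt_trans. apply (abs_RInt_le_const _ 0 X (L * (e / (L * X + 1)))); auto.
      apply exRI. intros t. apply cminus; auto.
      intros t Ht. pose proof (pt t Ht). pose proof (Rabs_pos (f (fst p t) (snd p t) - f (solth f g a0 b0 t) (solv f g a0 b0 t))).
      unfold minus, plus, opp; simpl. unfold Rminus in *. lra. replace ((X - 0) * (L * (e / (L * X + 1)))) with (L * X * (e / (L * X + 1))) by ring; exact bd. }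
  split.
  - assert (M : is_lim_seq (fun n => fst (pic f g a0 b0 (S n)) x) (a0 + RInt (fun t => f (solth f g a0 b0 t) (solv f g a0 b0 t)) 0 X)).
    { apply lim_eps. intros e He. destruct (Hconv e He) as [N HN]. exists N. intros n Hn.
      destruct (HN n Hn) as [H1 _]. simpl. fold X.
      replace (a0 + RInt (fun t : R => f (fst (pic f g a0 b0 n) t) (snd (pic f g a0 b0 n) t)) 0 X -
               (a0 + RInt (fun t : R => f (solth f g a0 b0 t) (solv f g a0 b0 t)) 0 X)) with
        (RInt (fun t : R => f (fst (pic f g a0 b0 n) t) (snd (pic f g a0 b0 n) t)) 0 X -
               RInt (fun t : R => f (solth f g a0 b0 t) (solv f g a0 b0 t)) 0 X) by ring. exact H1. }
    apply is_lim_seq_unique in M. apply is_lim_seq_unique in L1. rewrite L1 in M. injection M. auto.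
  - assert (M : is_lim_seq (fun n => snd (pic f g a0 b0 (S n)) x) (b0 + RInt (fun t => g (solth f g a0 b0 t) (solv f g a0 b0 t)) 0 X)).
    { apply lim_eps. intros e He. destruct (Hconv e He) as [N HN]. exists N. intros n Hn.
      destruct (HN n Hn) as [_ H1]. simpl. fold X.
      replace (b0 + RInt (fun t : R => g (fst (pic f g a0 b0 n) t) (snd (pic f g a0 b0 n) t)) 0 X -
               (b0 + RInt (fun t : R => g (solth f g a0 b0 t) (solv f g a0 b0 t)) 0 X)) with
        (RInt (fun t : R => g (fst (pic f g a0 b0 n) t) (snd (pic f g a0 b0 n) t)) 0 X -
               RInt (fun t : R => g (solth f g a0 b0 t) (solv f g a0 b0 t)) 0 X) by ring. exact H1. }
    apply is_lim_seq_unique in M. apply is_lim_seq_unique in L2. rewrite L2 in M. injection M. auto.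
Qed.

Definition TH f g a0 b0 x := a0 + RInt (fun t => f (solth f g a0 b0 (cl t)) (solv f g a0 b0 (cl t))) 0 x.
Definition VV f g a0 b0 x := b0 + RInt (fun t => g (solth f g a0 b0 (cl t)) (solv f g a0 b0 (cl t))) 0 x.

Lemma isd_const (c x : R) : is_derive (fun _ : R => c) x 0.
Proof. apply is_derive_Reals. apply derivable_pt_lim_const. Qed.

Lemma isd_pc (c : R) (h : R -> R) x l : is_derive h x l -> is_derive (fun y => c + h y) x l.
Proof.
  intros H. apply is_derive_Reals in H. apply is_derive_Reals.
  replace l with (0 + l) by ring. apply (derivable_pt_lim_plus (fun _ => c) h). apply derivable_pt_lim_const. auto.
Qed.

Lemma TH_sol f g L a0 b0 x : 0 < L -> Lip f g L -> 0 <= x ->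
  TH f g a0 b0 x = solth f g a0 b0 x /\ VV f g a0 b0 x = solv f g a0 b0 x.
Proof.
  intros HL Hl Hx. destruct (sol_int f g L a0 b0 x HL Hl) as [E1 E2]. rewrite cl_pos in E1, E2 by auto.
  unfold TH, VV. split.
  - rewrite E1. f_equal. apply RInt_ext. intros t Ht. rewrite Rmin_left in Ht by lra. rewrite Rmax_right in Ht by lra.
    rewrite cl_pos by lra. reflexivity.
  - rewrite E2. f_equal. apply RInt_ext. intros t Ht. rewrite Rmin_left in Ht by lra. rewrite Rmax_right in Ht by lra.
    rewrite cl_pos by lra. reflexivity.
Qed.

Lemma ode_exists f g L a0 b0 : 0 < L -> Lip f g L ->
  TH f g a0 b0 0 = a0 /\ VV f g a0 b0 0 = b0 /\
  (forall x, is_derive (TH f g a0 b0) x (f (TH f g a0 b0 (cl x)) (VV f g a0 b0 (cl x)))) /\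
  (forall x, is_derive (VV f g a0 b0) x (g (TH f g a0 b0 (cl x)) (VV f g a0 b0 (cl x)))) /\
  (forall x, TH f g a0 b0 x = a0 + RInt (fun t => f (TH f g a0 b0 (cl t)) (VV f g a0 b0 (cl t))) 0 x) /\
  (forall x, VV f g a0 b0 x = b0 + RInt (fun t => g (TH f g a0 b0 (cl t)) (VV f g a0 b0 (cl t))) 0 x).
Proof.
  intros HL Hl.
  assert (Ecl : forall t, TH f g a0 b0 (cl t) = solth f g a0 b0 (cl t) /\ VV f g a0 b0 (cl t) = solv f g a0 b0 (cl t))
    by (intros t; apply (TH_sol f g L); auto; apply cl_ge0).
  assert (Cs : forall t, continuous (fun t => solth f g a0 b0 (cl t)) t /\ continuous (fun t => solv f g a0 b0 (cl t)) t).
  { intros t. destruct (sol_cont f g L a0 b0 (cl t) HL Hl). split; apply ccomp; auto; apply cl_cont. }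
  assert (Cf : forall t, continuous (fun t => f (solth f g a0 b0 (cl t)) (solv f g a0 b0 (cl t))) t)
    by (intros t; destruct (Cs t); apply (lip_cont f g L (fun t => solth f g a0 b0 (cl t)) (fun t => solv f g a0 b0 (cl t))); auto).
  assert (Cg : forall t, continuous (fun t => g (solth f g a0 b0 (cl t)) (solv f g a0 b0 (cl t))) t)
    by (intros t; destruct (Cs t); apply (lip_cont f g L (fun t => solth f g a0 b0 (cl t)) (fun t => solv f g a0 b0 (cl t))); auto).
  split; [|split; [|split; [|split; [|split]]]].
  - unfold TH. rewrite (RInt_point (V:=R_CompleteNormedModule)). unfold zero; simpl. ring.
  - unfold VV. rewrite (RInt_point (V:=R_CompleteNormedModule)). unfold zero; simpl. ring.
  - intros x. destruct (Ecl x) as [E1 E2]. rewrite E1, E2. unfold TH.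
    apply isd_pc. apply (RInt_der (fun t => f (solth f g a0 b0 (cl t)) (solv f g a0 b0 (cl t)))); auto.
  - intros x. destruct (Ecl x) as [E1 E2]. rewrite E1, E2. unfold VV.
    apply isd_pc. apply (RInt_der (fun t => g (solth f g a0 b0 (cl t)) (solv f g a0 b0 (cl t)))); auto.
  - intros x. unfold TH at 1. f_equal. apply RInt_ext. intros t _. destruct (Ecl t) as [E1 E2]. rewrite E1, E2. reflexivity.
  - intros x. unfold VV at 1. f_equal. apply RInt_ext. intros t _. destruct (Ecl t) as [E1 E2]. rewrite E1, E2. reflexivity.
Qed.

Lemma int_split (F1 F2 G : R -> R) x : (forall t, continuous F1 t) -> (forall t, continuous F2 t) -> (forall t, continuous G t) ->
  RInt F1 0 x - RInt F2 0 x = RInt (fun t => F1 t - G t) 0 x + RInt (fun t => G t - F2 t) 0 x.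
Proof.
  intros C1 C2 C3.
  rewrite (RInt_minus (V:=R_CompleteNormedModule) F1 G) by (apply exRI; auto).
  rewrite (RInt_minus (V:=R_CompleteNormedModule) G F2) by (apply exRI; auto).
  unfold minus, plus, opp; simpl. ring.
Qed.

Lemma gronwall (f1 g1 f2 g2 : R -> R -> R) (L a1 b1 a2 b2 E X : R) (th1 v1 th2 v2 : R -> R) :
  0 < L -> Lip f1 g1 L -> Lip f2 g2 L -> 0 <= X -> 0 <= E ->
  (forall x, continuous th1 x) -> (forall x, continuous v1 x) ->
  (forall x, continuous th2 x) -> (forall x, continuous v2 x) ->
  (forall x, th1 x = a1 + RInt (fun t => f1 (th1 (cl t)) (v1 (cl t))) 0 x) ->
  (forall x, v1 x = b1 + RInt (fun t => g1 (th1 (cl t)) (v1 (cl t))) 0 x) ->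
  (forall x, th2 x = a2 + RInt (fun t => f2 (th2 (cl t)) (v2 (cl t))) 0 x) ->
  (forall x, v2 x = b2 + RInt (fun t => g2 (th2 (cl t)) (v2 (cl t))) 0 x) ->
  (forall t, 0 <= t <= X -> Rabs (f1 (th2 t) (v2 t) - f2 (th2 t) (v2 t)) + Rabs (g1 (th2 t) (v2 t) - g2 (th2 t) (v2 t)) <= E) ->
  forall x, 0 <= x <= X ->
  Rabs (th1 x - th2 x) + Rabs (v1 x - v2 x) <= (Rabs (a1 - a2) + Rabs (b1 - b2) + E * X) * exp (L * X).
Proof.
  intros HL Hl1 Hl2 HX HE Ct1 Cv1 Ct2 Cv2 I1 J1 I2 J2 HEb.
  set (D := fun x => Rabs (th1 x - th2 x) + Rabs (v1 x - v2 x)).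
  assert (CD : forall x, continuous D x) by (intros; unfold D; apply cplus; apply cabs; apply cminus; auto).
  destruct (continuity_ab_maj D 0 X HX) as [Mx [HMx _]]. intros; apply cont_pt; auto.
  set (B := D Mx).
  set (A := Rabs (a1 - a2) + Rabs (b1 - b2) + E * X).
  assert (HA : 0 <= A) by (unfold A; pose proof (Rabs_pos (a1 - a2)); pose proof (Rabs_pos (b1 - b2)); nra).
  assert (HB : 0 <= B) by (unfold B, D; pose proof (Rabs_pos (th1 Mx - th2 Mx)); pose proof (Rabs_pos (v1 Mx - v2 Mx)); lra).
  assert (Ccl : forall (h : R -> R), (forall x, continuous h x) -> forall x, continuous (fun t => h (cl t)) x)
    by (intros h Hh x; apply ccomp; auto; apply cl_cont).
  assert (CF : forall (f g : R -> R -> R) (th v : R -> R), Lip f g L -> (forall x, continuous th x) -> (forall x, continuous v x) ->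
     (forall x, continuous (fun t => f (th (cl t)) (v (cl t))) x) /\ (forall x, continuous (fun t => g (th (cl t)) (v (cl t))) x)).
  { intros f g th v Hl Ct Cv. split; intros x; apply (lip_cont f g L (fun t => th (cl t)) (fun t => v (cl t))); auto. }
  destruct (CF f1 g1 th1 v1 Hl1 Ct1 Cv1) as [Cf11 Cg11].
  destruct (CF f1 g1 th2 v2 Hl1 Ct2 Cv2) as [Cf12 Cg12].
  destruct (CF f2 g2 th2 v2 Hl2 Ct2 Cv2) as [Cf22 Cg22].
  assert (claim : forall n x, 0 <= x <= X -> D x <= A * exp (L * x) + B * ((L * x) ^ n / INR (fact n))).
  { induction n; intros x Hx.
    - simpl. replace (1 / 1) with 1 by field. pose proof (HMx x Hx). fold B in H.
      pose proof (exp_pos (L * x)). nra.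
    - unfold D. rewrite (I1 x), (I2 x), (J1 x), (J2 x).
      replace (a1 + RInt (fun t => f1 (th1 (cl t)) (v1 (cl t))) 0 x - (a2 + RInt (fun t => f2 (th2 (cl t)) (v2 (cl t))) 0 x))
        with ((a1 - a2) + (RInt (fun t => f1 (th1 (cl t)) (v1 (cl t))) 0 x - RInt (fun t => f2 (th2 (cl t)) (v2 (cl t))) 0 x)) by ring.
      replace (b1 + RInt (fun t => g1 (th1 (cl t)) (v1 (cl t))) 0 x - (b2 + RInt (fun t => g2 (th2 (cl t)) (v2 (cl t))) 0 x))
        with ((b1 - b2) + (RInt (fun t => g1 (th1 (cl t)) (v1 (cl t))) 0 x - RInt (fun t => g2 (th2 (cl t)) (v2 (cl t))) 0 x)) by ring.
      rewrite (int_split _ _ (fun t => f1 (th2 (cl t)) (v2 (cl t)))); auto.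
      rewrite (int_split _ _ (fun t => g1 (th2 (cl t)) (v2 (cl t)))); auto.
      set (k1 := RInt (fun t => f1 (th1 (cl t)) (v1 (cl t)) - f1 (th2 (cl t)) (v2 (cl t))) 0 x).
      set (k2 := RInt (fun t => g1 (th1 (cl t)) (v1 (cl t)) - g1 (th2 (cl t)) (v2 (cl t))) 0 x).
      set (m1 := RInt (fun t => f1 (th2 (cl t)) (v2 (cl t)) - f2 (th2 (cl t)) (v2 (cl t))) 0 x).
      set (m2 := RInt (fun t => g1 (th2 (cl t)) (v2 (cl t)) - g2 (th2 (cl t)) (v2 (cl t))) 0 x).
      assert (Hk : Rabs k1 + Rabs k2 <= A * (exp (L * x) - 1) + B * ((L * x) ^ (S n) / INR (fact (S n)))).
      { rewrite <- RInt_gron. apply int_step. lra.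
        - intros t; apply cminus; auto.
        - intros t; apply cminus; auto.
        - intros t. apply cmult. apply cconst. apply cplus.
          apply cmult. apply cconst. apply cexp. apply cmult. apply cconst. apply cid.
          apply cmult. apply cconst. apply (cmult (fun t => (L*t)^n) (fun _ => / INR (fact n))).
          apply cpow. apply cmult. apply cconst. apply cid. apply cconst.
        - intros t Ht. rewrite cl_pos by lra. eapply Rle_trans. apply Hl1.
          apply Rmult_le_compat_l. lra. apply IHn. lra. }
      assert (Hm : Rabs m1 + Rabs m2 <= E * X).
      { eapply Rle_trans. apply (int_step _ _ (fun _ => E)). lra.
        - intros t; apply cminus; auto.
        - intros t; apply cminus; auto.
        - intros t; apply cconst.
        - intros t Ht. rewrite cl_pos by lra. apply HEb. lra.
        - rewrite (RInt_const (V:=R_CompleteNormedModule)). unfold scal; simpl; unfold mult; simpl. nra. }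
      pose proof (Rabs_triang (a1 - a2) (k1 + m1)). pose proof (Rabs_triang k1 m1).
      pose proof (Rabs_triang (b1 - b2) (k2 + m2)). pose proof (Rabs_triang k2 m2).
      unfold A in *. lra. }
  intros x Hx. fold (D x).
  assert (D x <= A * exp (L * x)).
  { apply Rnot_lt_le. intros Hc.
    set (del := D x - A * exp (L * x)).
    assert (Hdel : 0 < del / (B + 1)) by (apply Rdiv_lt_0_compat; unfold del; lra).
    destruct (cv_speed_pow_fact (L * x) _ Hdel) as [N HN]. specialize (HN N (le_n N)).
    unfold Rdist in HN. rewrite Rminus_0_r in HN.
    pose proof (claim N x Hx). pose proof (Rle_abs ((L * x) ^ N / INR (fact N))).
    assert (B * ((L * x) ^ N / INR (fact N)) <= B * (del / (B + 1))) by (apply Rmult_le_compat_l; lra).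
    assert (B * (del / (B + 1)) < del). { apply (Rmult_lt_reg_r (B+1)). lra. field_simplify; try lra. unfold del. nra. }
    unfold del in *. lra. }
  assert (exp (L * x) <= exp (L * X)) by (apply exp_le_3 || (destruct (Req_dec x X); [subst; lra| left; apply exp_increasing; nra])).
  nra.
Qed.

Lemma dw_cont (P : R -> Prop) (f : R -> R) x l : deriv_within P f x l -> cont_within P f x.
Proof.
  unfold deriv_within, cont_within. intros H. apply within_eps. intros e He.
  destruct (proj1 (within_eps _ _ _ _) H 1 Rlt_0_1) as [d1 [Hd1 H1]].
  assert (Hq : 0 < e / (Rabs l + 1)) by (apply Rdiv_lt_0_compat; [lra| pose proof (Rabs_pos l); lra]).
  exists (Rmin d1 (e / (Rabs l + 1))). split. apply Rmin_pos; auto.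
  intros y Hy Py. destruct (Req_dec y x) as [->|Hne]. rewrite Rminus_diag, Rabs_R0. lra.
  assert (Hy1 : Rabs (y - x) < d1) by (eapply Rlt_le_trans; [exact Hy| apply Rmin_l]).
  assert (Hy2 : Rabs (y - x) < e / (Rabs l + 1)) by (eapply Rlt_le_trans; [exact Hy| apply Rmin_r]).
  specialize (H1 y Hy1 (conj Py Hne)).
  assert (Hyx : y - x <> 0) by lra.
  replace (f y - f x) with (((f y - f x) / (y - x) - l + l) * (y - x)) by (field; auto).
  rewrite Rabs_mult.
  assert (Rabs ((f y - f x) / (y - x) - l + l) <= Rabs l + 1) by (eapply Rle_trans; [apply Rabs_triang| lra]).
  assert (Rabs (y - x) * (Rabs l + 1) < e).
  { apply (Rmult_lt_reg_r (/ (Rabs l + 1))). apply Rinv_0_lt_compat. pose proof (Rabs_pos l); lra.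
    rewrite Rmult_assoc, Rinv_r by (pose proof (Rabs_pos l); lra). rewrite Rmult_1_r. exact Hy2. }
  pose proof (Rabs_pos (y - x)). pose proof (Rabs_pos ((f y - f x) / (y - x) - l + l)). nra.
Qed.

Lemma dw_derive (P : R -> Prop) (f : R -> R) x l : (exists d, 0 < d /\ forall y, Rabs (y - x) < d -> P y) ->
  deriv_within P f x l -> is_derive f x l.
Proof.
  intros [d0 [Hd0 HP]] H. apply is_derive_Reals. intros e He.
  destruct (proj1 (within_eps _ _ _ _) H e He) as [d1 [Hd1 H1]].
  exists (mkposreal (Rmin d0 d1) (Rmin_pos _ _ Hd0 Hd1)). intros h Hh Hhd. simpl in Hhd.
  assert (Rabs (x + h - x) < Rmin d0 d1) by (replace (x + h - x) with h by ring; auto).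
  assert (Rabs (x + h - x) < d1) by (eapply Rlt_le_trans; [exact H0| apply Rmin_r]).
  assert (Rabs (x + h - x) < d0) by (eapply Rlt_le_trans; [exact H0| apply Rmin_l]).
  assert (Hne: x + h <> x) by (intro Hc; apply Hh; lra). specialize (H1 (x + h) H2 (conj (HP _ H3) Hne)).
  replace (x + h - x) with h in H1 by ring. exact H1.
Qed.

Definition c01 (t : R) := Rmax 0 (Rmin t 1).
Lemma c01_range t : 0 <= c01 t <= 1.
Proof. unfold c01, Rmax, Rmin. repeat destruct Rle_dec; lra. Qed.
Lemma c01_id t : 0 <= t <= 1 -> c01 t = t.
Proof. unfold c01, Rmax, Rmin. repeat destruct Rle_dec; lra. Qed.
Lemma c01_lip s t : Rabs (c01 s - c01 t) <= Rabs (s - t).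
Proof. unfold c01, Rmax, Rmin. repeat destruct Rle_dec; unfold Rabs; repeat destruct Rcase_abs; lra. Qed.

Lemma cw_c01 (h : R -> R) : (forall x, 0 <= x <= 1 -> cont_within (fun t => 0 <= t <= 1) h x) ->
  forall x, continuous (fun t => h (c01 t)) x.
Proof.
  intros H x. apply cont_eps. intros e He.
  destruct (proj1 (within_eps _ _ _ _) (H (c01 x) (c01_range x)) e He) as [d [Hd Hd']].
  exists d. split; auto. intros y Hy. apply Hd'. eapply Rle_lt_trans. apply c01_lip. auto. apply c01_range.
Qed.

Lemma lip_C2 (F F1 F2 : R -> R) :
  (forall x, 0 <= x <= 1 -> deriv_within (fun t => 0 <= t <= 1) F x (F1 x)) ->
  (forall x, 0 <= x <= 1 -> deriv_within (fun t => 0 <= t <= 1) F1 x (F2 x)) ->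
  exists K, 0 < K /\ forall s t, Rabs (F (c01 s) - F (c01 t)) <= K * Rabs (s - t).
Proof.
  intros H1 H2.
  assert (CF1 : forall x, continuous (fun t => F1 (c01 t)) x) by (apply cw_c01; intros; eapply dw_cont; eauto).
  assert (CF : forall x, continuous (fun t => F (c01 t)) x) by (apply cw_c01; intros; eapply dw_cont; eauto).
  destruct (continuity_ab_maj (fun t => Rabs (F1 (c01 t))) 0 1 Rle_0_1) as [M [HM _]].
  intros; apply cont_pt; apply cabs; auto.
  set (K := Rabs (F1 (c01 M)) + 1). assert (HK : 0 < K) by (unfold K; pose proof (Rabs_pos (F1 (c01 M))); lra).
  exists K. split; auto.
  assert (inner : forall s t, 0 <= s <= 1 -> 0 <= t <= 1 -> s <= t -> Rabs (F (c01 t) - F (c01 s)) <= K * Rabs (t - s)).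
  { intros s t Hs Ht Hst.
    destruct (MVT_gen (fun t => F (c01 t)) s t F1) as [c [Hc Heq]].
    - intros x Hx. rewrite Rmin_left in Hx by lra. rewrite Rmax_right in Hx by lra.
      apply (is_derive_ext_loc F). apply locR. exists (Rmin x (1 - x)). split. apply Rmin_pos; lra.
      intros y Hy. rewrite c01_id. auto. pose proof (Rmin_l x (1-x)). pose proof (Rmin_r x (1-x)).
      unfold Rabs in Hy; destruct Rcase_abs in Hy; lra.
      apply (dw_derive (fun t => 0 <= t <= 1)). exists (Rmin x (1 - x)). split. apply Rmin_pos; lra.
      intros y Hy. pose proof (Rmin_l x (1-x)). pose proof (Rmin_r x (1-x)).
      unfold Rabs in Hy; destruct Rcase_abs in Hy; lra. apply H1. lra.
    - intros; apply cont_pt; auto.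
    - rewrite Rmin_left in Hc by lra. rewrite Rmax_right in Hc by lra. simpl in Heq. rewrite Heq.
      rewrite Rabs_mult. apply Rmult_le_compat_r. apply Rabs_pos.
      pose proof (HM c ltac:(lra)). simpl in H. rewrite c01_id in H by lra. unfold K. lra. }
  intros s t.
  assert (E : forall u, F (c01 u) = F (c01 (c01 u))) by (intros u; rewrite (c01_id (c01 u)); auto; apply c01_range).
  rewrite (E s), (E t).
  pose proof (c01_range s). pose proof (c01_range t). pose proof (c01_lip s t).
  destruct (Rle_dec (c01 s) (c01 t)).
  - rewrite Rabs_minus_sym. eapply Rle_trans. apply inner; auto.
    apply Rmult_le_compat_l. lra. rewrite (Rabs_minus_sym s t). apply c01_lip.
  - eapply Rle_trans. apply inner; auto. lra. apply Rmult_le_compat_l. lra. apply c01_lip.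
Qed.

Lemma conn (cmax : R) (U O : R -> Prop) : cmax < 0 -> O cmax -> U 0 ->
  (forall c, U c -> O c -> False) ->
  (forall c0, cmax <= c0 <= 0 -> U c0 -> exists d, 0 < d /\ forall c, cmax <= c <= 0 -> Rabs (c - c0) < d -> U c) ->
  (forall c0, cmax <= c0 <= 0 -> O c0 -> exists d, 0 < d /\ forall c, cmax <= c <= 0 -> Rabs (c - c0) < d -> O c) ->
  exists c, cmax <= c <= 0 /\ ~ U c /\ ~ O c.
Proof.
  intros Hc HO HU Hdis oU oO.
  set (E := fun c => cmax <= c <= 0 /\ forall c', cmax <= c' <= c -> O c').
  assert (Eb : bound E) by (exists 0; intros c [Hc1 _]; lra).
  assert (Ene : exists c, E c) by (exists cmax; split; [lra| intros c' Hc'; replace c' with cmax by lra; auto]).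
  destruct (completeness E Eb Ene) as [m [Hub Hlub]].
  assert (Hm1 : cmax <= m) by (apply Hub; destruct Ene as [c Hcc]; split; [lra| intros c' Hc'; replace c' with cmax by lra; auto]).
  assert (Hm2 : m <= 0) by (apply Hlub; intros c [Hc1 _]; lra).
  assert (F1 : forall c', cmax <= c' < m -> O c').
  { intros c' Hc'. destruct (classic (exists e, E e /\ c' < e)) as [[e [[He1 He2] He3]]|Hn].
    - apply He2. lra.
    - exfalso. assert (m <= c'). apply Hlub. intros e He. apply Rnot_lt_le. intros Hlt. apply Hn. exists e; auto. lra. }
  exists m. split; [lra|]. split.
  - intros HUm. destruct (Req_dec m cmax) as [Heq|Hne].
    + rewrite Heq in HUm. eapply Hdis; eauto.
    + destruct (oU m ltac:(lra) HUm) as [d [Hd Hd']].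
      set (c' := Rmax (m - d/2) cmax).
      assert (cmax <= c' < m) by (unfold c', Rmax; destruct Rle_dec; lra).
      apply (Hdis c'). apply Hd'. lra. unfold c', Rmax; destruct Rle_dec; unfold Rabs; destruct Rcase_abs; lra.
      apply F1; auto.
  - intros HOm. destruct (oO m ltac:(lra) HOm) as [d [Hd Hd']].
    set (c2 := Rmin (m + d/2) 0).
    assert (Ec2 : E c2).
    { split. unfold c2, Rmin; destruct Rle_dec; lra.
      intros c' Hc'. destruct (Rlt_le_dec c' m). apply F1; lra.
      apply Hd'. unfold c2, Rmin in Hc'; destruct Rle_dec in Hc'; lra.
      unfold c2, Rmin in Hc'; destruct Rle_dec in Hc'; unfold Rabs; destruct Rcase_abs; lra. }
    pose proof (Hub c2 Ec2). assert (m = 0) by (unfold c2, Rmin in H; destruct Rle_dec in H; lra).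
    subst m. eapply Hdis; eauto.
Qed.

Lemma deriv_pos_right (F : R -> R) x0 d : is_derive F x0 d -> 0 < d ->
  exists del, 0 < del /\ forall h, 0 < h < del -> F x0 < F (x0 + h).
Proof.
  intros H Hd. apply is_derive_Reals in H. destruct (H (d/2) ltac:(lra)) as [del Hdel].
  exists del. split. apply cond_pos. intros h Hh.
  assert (h <> 0) by lra. assert (Rabs h < del) by (rewrite Rabs_right; lra).
  specialize (Hdel h H0 H1). apply Rabs_def2 in Hdel. destruct Hdel as [_ Hdel].
  assert ((F (x0 + h) - F x0) / h > 0) by lra.
  assert (F (x0 + h) - F x0 > 0). { replace (F (x0 + h) - F x0) with ((F (x0 + h) - F x0) / h * h) by (field; lra). nra. }
  lra.
Qed.

Lemma deriv_neg_right (F : R -> R) x0 d : is_derive F x0 d -> d < 0 ->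
  exists del, 0 < del /\ forall h, 0 < h < del -> F (x0 + h) < F x0.
Proof.
  intros H Hd. destruct (deriv_pos_right (fun x => - F x) x0 (- d)) as [del [Hdel H']].
  apply (is_derive_opp F x0 d H). lra. exists del. split; auto. intros h Hh. specialize (H' h Hh). lra.
Qed.

Definition Model (cmax r K : R) (a ts P : R -> R) (Th V : R -> R -> R) : Prop :=
 cmax < 0 /\ r < 1 /\ 0 < K /\
 (forall x, continuous P x) /\
 (forall t, t < 1 -> 0 < P t) /\
 (forall t, t <= 1 -> P t <= K * (1 - t)) /\
 ts 0 = 0 /\ ts cmax = 1 /\ (forall c, cmax < c <= 0 -> 0 <= ts c < 1) /\
 a 0 = 0 /\ (forall c, cmax <= c < 0 -> 0 < a c) /\
 (forall c, cmax <= c <= 0 -> Th c 0 = ts c /\ V c 0 = a c * (ts c - r)) /\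
 (forall c x, cmax <= c <= 0 -> 0 <= x -> is_derive (Th c) x (V c x) /\ is_derive (V c) x (a c * V c x - P (Th c x))) /\
 (forall c x, cmax <= c <= 0 -> continuous (Th c) x /\ continuous (V c) x) /\
 (forall c0, cmax <= c0 <= 0 -> forall X e, 0 <= X -> 0 < e -> exists d, 0 < d /\ forall c, cmax <= c <= 0 ->
     Rabs (c - c0) < d -> forall x, 0 <= x <= X -> Rabs (Th c x - Th c0 x) + Rabs (V c x - V c0 x) < e).

Ltac unpack HM := destruct HM as [Hcm [Hr [HK [HPc [HPpos [HPK [Hts0 [Htsm [Htsr [Ha0 [Hapos [Hinit [Hder [Hcont Hdep]]]]]]]]]]]]]].

Definition UU (Th V : R -> R -> R) c := exists x1, 0 <= x1 /\ V c x1 < 0 /\ forall x, 0 <= x <= x1 -> Th c x < 1.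
Definition OO (Th V : R -> R -> R) c := exists x1, 0 <= x1 /\ 1 < Th c x1 /\ forall x, 0 <= x <= x1 -> 0 < V c x.

Lemma push_U cmax r K a ts P Th V c x0 : Model cmax r K a ts P Th V -> cmax <= c <= 0 -> 0 <= x0 ->
  (forall x, 0 <= x <= x0 -> Th c x < 1) -> V c x0 = 0 -> UU Th V c.
Proof.
  intros HM Hc Hx0 Hlt HV. unpack HM.
  destruct (Hder c x0 Hc Hx0) as [_ DV].
  assert (Hneg : a c * V c x0 - P (Th c x0) < 0) by (rewrite HV; pose proof (HPpos _ (Hlt x0 ltac:(lra))); lra).
  destruct (deriv_neg_right _ _ _ DV Hneg) as [d1 [Hd1 H1]].
  destruct (Hcont c x0 Hc) as [CT _].
  assert (He : 0 < 1 - Th c x0) by (pose proof (Hlt x0 ltac:(lra)); lra).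
  destruct (proj1 (cont_eps _ _) CT _ He) as [d2 [Hd2 H2]].
  set (h := Rmin d1 d2 / 2).
  assert (Hh : 0 < h /\ h < d1 /\ h < d2) by (unfold h; pose proof (Rmin_l d1 d2); pose proof (Rmin_r d1 d2); pose proof (Rmin_pos d1 d2 Hd1 Hd2); lra).
  exists (x0 + h). split. lra. split. rewrite <- HV. apply H1. lra.
  intros x Hx. destruct (Rle_dec x x0). apply Hlt; lra.
  assert (Rabs (x - x0) < d2) by (rewrite Rabs_right; lra). specialize (H2 x H). apply Rabs_def2 in H2. lra.
Qed.

Lemma push_O cmax r K a ts P Th V c x0 : Model cmax r K a ts P Th V -> cmax <= c <= 0 -> 0 <= x0 ->
  (forall x, 0 <= x <= x0 -> 0 < V c x) -> Th c x0 = 1 -> OO Th V c.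
Proof.
  intros HM Hc Hx0 Hpos HT. unpack HM.
  destruct (Hder c x0 Hc Hx0) as [DT _].
  destruct (deriv_pos_right _ _ _ DT (Hpos x0 ltac:(lra))) as [d1 [Hd1 H1]].
  destruct (Hcont c x0 Hc) as [_ CV].
  assert (He : 0 < V c x0) by (apply Hpos; lra).
  destruct (proj1 (cont_eps _ _) CV _ He) as [d2 [Hd2 H2]].
  set (h := Rmin d1 d2 / 2).
  assert (Hh : 0 < h /\ h < d1 /\ h < d2) by (unfold h; pose proof (Rmin_l d1 d2); pose proof (Rmin_r d1 d2); pose proof (Rmin_pos d1 d2 Hd1 Hd2); lra).
  exists (x0 + h). split. lra. split. rewrite <- HT. apply H1. lra.
  intros x Hx. destruct (Rle_dec x x0). apply Hpos; lra.
  assert (Rabs (x - x0) < d2) by (rewrite Rabs_right; lra). specialize (H2 x H). apply Rabs_def2 in H2. lra.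
Qed.

Lemma UO_disj (Th V : R -> R -> R) c : UU Th V c -> OO Th V c -> False.
Proof.
  intros [x1 [H1 [H2 H3]]] [x2 [G1 [G2 G3]]].
  destruct (Rle_dec x1 x2). pose proof (G3 x1 ltac:(lra)). lra.
  pose proof (H3 x2 ltac:(lra)). lra.
Qed.

Lemma U_open cmax r K a ts P Th V c0 : Model cmax r K a ts P Th V -> cmax <= c0 <= 0 -> UU Th V c0 ->
  exists d, 0 < d /\ forall c, cmax <= c <= 0 -> Rabs (c - c0) < d -> UU Th V c.
Proof.
  intros HM Hc0 [x1 [H1 [H2 H3]]]. pose proof HM as HM'. unpack HM.
  destruct (continuity_ab_maj (Th c0) 0 x1 H1) as [M [HMx HMr]].
  intros; apply cont_pt; apply Hcont; auto.
  assert (HM1 : Th c0 M < 1) by (apply H3; auto).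
  set (e := Rmin (1 - Th c0 M) (- V c0 x1)).
  assert (He : 0 < e) by (unfold e; apply Rmin_pos; lra).
  destruct (Hdep c0 Hc0 x1 e H1 He) as [d [Hd Hd']].
  exists d. split; auto. intros c Hc Hcd. exists x1. split; auto. split.
  - specialize (Hd' c Hc Hcd x1 ltac:(lra)). pose proof (Rabs_pos (Th c x1 - Th c0 x1)).
    assert (Rabs (V c x1 - V c0 x1) < e) by lra. apply Rabs_def2 in H0. pose proof (Rmin_r (1 - Th c0 M) (- V c0 x1)). fold e in H4. lra.
  - intros x Hx. specialize (Hd' c Hc Hcd x Hx). pose proof (Rabs_pos (V c x - V c0 x)).
    assert (Rabs (Th c x - Th c0 x) < e) by lra. apply Rabs_def2 in H0. pose proof (Rmin_l (1 - Th c0 M) (- V c0 x1)). fold e in H4.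
    pose proof (HMx x Hx). lra.
Qed.

Lemma O_open cmax r K a ts P Th V c0 : Model cmax r K a ts P Th V -> cmax <= c0 <= 0 -> OO Th V c0 ->
  exists d, 0 < d /\ forall c, cmax <= c <= 0 -> Rabs (c - c0) < d -> OO Th V c.
Proof.
  intros HM Hc0 [x1 [H1 [H2 H3]]]. pose proof HM as HM'. unpack HM.
  destruct (continuity_ab_min (V c0) 0 x1 H1) as [M [HMx HMr]].
  intros; apply cont_pt; apply Hcont; auto.
  assert (HM1 : 0 < V c0 M) by (apply H3; auto).
  set (e := Rmin (V c0 M) (Th c0 x1 - 1)).
  assert (He : 0 < e) by (unfold e; apply Rmin_pos; lra).
  destruct (Hdep c0 Hc0 x1 e H1 He) as [d [Hd Hd']].
  exists d. split; auto. intros c Hc Hcd. exists x1. split; auto. split.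
  - specialize (Hd' c Hc Hcd x1 ltac:(lra)). pose proof (Rabs_pos (V c x1 - V c0 x1)).
    assert (Rabs (Th c x1 - Th c0 x1) < e) by lra. apply Rabs_def2 in H0. pose proof (Rmin_r (V c0 M) (Th c0 x1 - 1)). fold e in H4. lra.
  - intros x Hx. specialize (Hd' c Hc Hcd x Hx). pose proof (Rabs_pos (Th c x - Th c0 x)).
    assert (Rabs (V c x - V c0 x) < e) by lra. apply Rabs_def2 in H0. pose proof (Rmin_l (V c0 M) (Th c0 x1 - 1)). fold e in H4.
    pose proof (HMx x Hx). lra.
Qed.

Lemma isd_mexp (u : R -> R) x du k : is_derive u x du ->
  is_derive (fun y => u y * exp (k * y)) x ((du + k * u x) * exp (k * x)).
Proof.
  intros H. auto_derive. exists du; auto.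
  replace (Derive (fun x0 : R => u x0) x) with du by (symmetry; apply is_derive_unique; auto). ring.
Qed.

Lemma isd_u (T W : R -> R) x dT dW : is_derive T x dT -> is_derive W x dW ->
  is_derive (fun y => (1 - T y) + W y) x (- dT + dW).
Proof.
  intros H1 H2. auto_derive. split. exists dT; auto. split. exists dW; auto. auto.
  replace (Derive (fun x0 : R => T x0) x) with dT by (symmetry; apply is_derive_unique; auto).
  replace (Derive (fun x0 : R => W x0) x) with dW by (symmetry; apply is_derive_unique; auto). ring.
Qed.

Lemma first_exit cmax r K a ts P Th V c : Model cmax r K a ts P Th V -> cmax < c < 0 ->
  ~ UU Th V c -> ~ OO Th V c -> 0 < V c 0 -> forall x, 0 <= x -> 0 < V c x /\ Th c x < 1.
Proof.
  intros HM Hc NU NO HV0. pose proof HM as HM'. unpack HM.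
  assert (Hc' : cmax <= c <= 0) by lra.
  destruct (Hinit c Hc') as [HT0 _].
  assert (Hts : 0 <= ts c < 1) by (apply Htsr; lra).
  assert (Ha : 0 < a c) by (apply Hapos; lra).
  apply NNPP. intros Hn. apply not_all_ex_not in Hn. destruct Hn as [xb Hxb].
  apply imply_to_and in Hxb. destruct Hxb as [Hxb0 Hxb].
  set (E := fun y => 0 <= y /\ forall x, 0 <= x <= y -> 0 < V c x /\ Th c x < 1).
  assert (Eb : forall y, E y -> y <= xb).
  { intros y [Hy1 Hy2]. apply Rnot_lt_le. intros Hlt. apply Hxb. apply Hy2. lra. }
  assert (E0 : E 0) by (split; [lra| intros x Hx; replace x with 0 by lra; rewrite HT0; lra]).
  destruct (completeness E (ex_intro _ xb Eb) (ex_intro _ 0 E0)) as [s [Hub Hlub]].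
  assert (Hs0 : 0 <= s) by (apply Hub; auto).
  assert (G1 : forall x, 0 <= x < s -> 0 < V c x /\ Th c x < 1).
  { intros x Hx. destruct (classic (exists e, E e /\ x < e)) as [[e [[He1 He2] He3]]|Hn].
    - apply He2. lra.
    - exfalso. assert (s <= x). apply Hlub. intros e He. apply Rnot_lt_le. intros Hlt. apply Hn. exists e; auto. lra. }
  destruct (Hcont c s Hc') as [CT CV].
  assert (bad : ~ (0 < V c s /\ Th c s < 1)).
  { intros [Hv Ht].
    destruct (proj1 (cont_eps _ _) CV _ Hv) as [d1 [Hd1 H1]].
    assert (Ht' : 0 < 1 - Th c s) by lra.
    destruct (proj1 (cont_eps _ _) CT _ Ht') as [d2 [Hd2 H2]].
    set (h := Rmin d1 d2 / 2).
    assert (Hh : 0 < h /\ h < d1 /\ h < d2) by (unfold h; pose proof (Rmin_l d1 d2); pose proof (Rmin_r d1 d2); pose proof (Rmin_pos d1 d2 Hd1 Hd2); lra).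
    assert (E (s + h)).
    { split. lra. intros x Hx. destruct (Rlt_le_dec x s). apply G1; lra.
      assert (Rabs (x - s) < d1) by (rewrite Rabs_right; lra). assert (Rabs (x - s) < d2) by (rewrite Rabs_right; lra).
      specialize (H1 x H). specialize (H2 x H0). apply Rabs_def2 in H1. apply Rabs_def2 in H2. lra. }
    pose proof (Hub _ H). lra. }
  assert (Hspos : 0 < s).
  { destruct Hs0 as [|Hs0]; auto. exfalso. apply bad. rewrite <- Hs0. rewrite HT0. lra. }
  assert (Vs : 0 <= V c s).
  { apply Rnot_lt_le. intros Hlt. assert (He : 0 < - V c s) by lra.
    destruct (proj1 (cont_eps _ _) CV _ He) as [d1 [Hd1 H1]].
    set (x := s - Rmin d1 s / 2).
    assert (0 <= x < s /\ Rabs (x - s) < d1) by (unfold x; pose proof (Rmin_l d1 s); pose proof (Rmin_r d1 s); pose proof (Rmin_pos d1 s Hd1 Hspos); split; [lra| rewrite Rabs_left; lra]).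
    destruct H as [Hx1 Hx2]. specialize (H1 x Hx2). apply Rabs_def2 in H1. pose proof (G1 x Hx1). lra. }
  assert (Ts : Th c s <= 1).
  { apply Rnot_lt_le. intros Hlt. assert (He : 0 < Th c s - 1) by lra.
    destruct (proj1 (cont_eps _ _) CT _ He) as [d1 [Hd1 H1]].
    set (x := s - Rmin d1 s / 2).
    assert (0 <= x < s /\ Rabs (x - s) < d1) by (unfold x; pose proof (Rmin_l d1 s); pose proof (Rmin_r d1 s); pose proof (Rmin_pos d1 s Hd1 Hspos); split; [lra| rewrite Rabs_left; lra]).
    destruct H as [Hx1 Hx2]. specialize (H1 x Hx2). apply Rabs_def2 in H1. pose proof (G1 x Hx1). lra. }
  destruct (Rlt_le_dec (Th c s) 1) as [Tlt|Tge].
  - apply NU. apply (push_U cmax r K a ts P Th V c s HM' Hc' (Rlt_le _ _ Hspos)).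
    intros x Hx. destruct (Rlt_le_dec x s). apply G1; lra. replace x with s by lra. auto.
    destruct Vs as [Vp|]; auto. exfalso. apply bad. auto.
  - assert (Tq : Th c s = 1) by lra.
    destruct Vs as [Vp|Vz].
    + apply NO. apply (push_O cmax r K a ts P Th V c s HM' Hc' (Rlt_le _ _ Hspos)).
      intros x Hx. destruct (Rlt_le_dec x s). apply G1; lra. replace x with s by lra. auto. exact Tq.
    + set (phi := fun y => ((1 - Th c y) + V c y) * exp ((1 + K) * y)).
      assert (phi 0 <= phi s).
      { apply (deriv_nonneg_mono phi (fun y => ((- V c y + (a c * V c y - P (Th c y))) + (1 + K) * ((1 - Th c y) + V c y)) * exp ((1 + K) * y))).
        lra.
        - intros y Hy. destruct (Hder c y Hc' ltac:(lra)) as [D1 D2].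
          apply (isd_mexp (fun y => (1 - Th c y) + V c y)). apply isd_u; auto.
        - intros y Hy. apply Rmult_le_pos; [| left; apply exp_pos].
          assert (HVy : 0 <= V c y /\ Th c y <= 1).
          { destruct (Rlt_le_dec y s). pose proof (G1 y ltac:(lra)); lra. replace y with s by lra. lra. }
          pose proof (HPK (Th c y) (proj2 HVy)). nra. }
      unfold phi in H. rewrite Tq, <- Vz, HT0 in H. rewrite Rmult_0_r, exp_0 in H. lra.
Qed.

Lemma shoot cmax r K a ts P Th V : Model cmax r K a ts P Th V ->
  exists c, cmax < c < 0 /\ forall x, 0 <= x -> 0 < V c x /\ Th c x < 1.
Proof.
  intros HM. pose proof HM as HM'. unpack HM.
  assert (U0 : UU Th V 0).
  { apply (push_U cmax r K a ts P Th V 0 0); auto; try lra.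
    intros x Hx. replace x with 0 by lra. destruct (Hinit 0 ltac:(lra)) as [H _]. rewrite H, Hts0. lra.
    destruct (Hinit 0 ltac:(lra)) as [_ H]. rewrite H, Ha0. ring. }
  assert (Om : OO Th V cmax).
  { apply (push_O cmax r K a ts P Th V cmax 0); auto; try lra.
    intros x Hx. replace x with 0 by lra. destruct (Hinit cmax ltac:(lra)) as [_ H]. rewrite H, Htsm.
    pose proof (Hapos cmax ltac:(lra)). nra.
    destruct (Hinit cmax ltac:(lra)) as [H _]. rewrite H, Htsm. auto. }
  destruct (conn cmax (UU Th V) (OO Th V) Hcm Om U0 (UO_disj Th V)
     (fun c0 Hc0 H => U_open cmax r K a ts P Th V c0 HM' Hc0 H)
     (fun c0 Hc0 H => O_open cmax r K a ts P Th V c0 HM' Hc0 H)) as [c [Hc [NU NO]]].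
  assert (Hc2 : cmax < c < 0).
  { split. destruct (Req_dec c cmax). subst; tauto. lra. destruct (Req_dec c 0). subst; tauto. lra. }
  exists c. split; auto.
  apply (first_exit cmax r K a ts P Th V c); auto.
  destruct (Hinit c Hc) as [HT0 HV0]. assert (Hts : 0 <= ts c < 1) by (apply Htsr; lra).
  destruct (Rlt_le_dec 0 (V c 0)) as [|Hle]; auto. exfalso. destruct Hle as [Hlt|Heq].
  - apply NU. exists 0. split. lra. split. auto. intros x Hx. replace x with 0 by lra. lra.
  - apply NU. apply (push_U cmax r K a ts P Th V c 0); auto; try lra.
    intros x Hx. replace x with 0 by lra. lra.
Qed.

Lemma isd_ml (T : R -> R) y dT b : is_derive T y dT -> is_derive (fun y => T y - b * y) y (dT - b).
Proof. intros H. auto_derive. exists dT; auto. replace (Derive (fun x0 : R => T x0) y) with dT by (symmetry; apply is_derive_unique; auto). ring. Qed.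
Lemma isd_mc (T : R -> R) y dT b : is_derive T y dT -> is_derive (fun y => T y - b) y dT.
Proof. intros H. auto_derive. exists dT; auto. replace (Derive (fun x0 : R => T x0) y) with dT by (symmetry; apply is_derive_unique; auto). ring. Qed.
Lemma isd_opp (T : R -> R) y dT : is_derive T y dT -> is_derive (fun y => - T y) y (- dT).
Proof. intros H. auto_derive. exists dT; auto. replace (Derive (fun x0 : R => T x0) y) with dT by (symmetry; apply is_derive_unique; auto). ring. Qed.

Lemma exp_shift (u a x x0 : R) : exp (a * x0) * exp (a * x - a * x0) = exp (a * x).
Proof. rewrite <- exp_plus. f_equal. ring. Qed.

Lemma asym (a : R) (P : R -> R) (K : R) (T W : R -> R) :
  0 < a -> 0 < K -> (forall x, continuous P x) -> (forall t, t < 1 -> 0 < P t) ->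
  (forall t, t <= 1 -> P t <= K * (1 - t)) -> 0 <= T 0 ->
  (forall x, 0 <= x -> is_derive T x (W x) /\ is_derive W x (a * W x - P (T x))) ->
  (forall x, 0 <= x -> 0 < W x /\ T x < 1) ->
  (forall x, 0 <= x -> T 0 <= T x) /\
  (forall e, 0 < e -> exists M, forall x, M < x -> Rabs (T x - 1) < e) /\
  (forall e, 0 < e -> exists M, forall x, M < x -> Rabs (W x - 0) < e).
Proof.
  intros Ha HK HPc HPpos HPK HT0 Hder Hgood.
  assert (Tmono : forall x y, 0 <= x <= y -> T x <= T y).
  { intros x y Hxy. apply (deriv_nonneg_mono T W). lra. intros z Hz. apply Hder; lra.
    intros z Hz. left; apply Hgood; lra. }
  assert (growth : forall x1 x b, 0 <= x1 <= x -> (forall y, x1 <= y <= x -> b <= W y) -> T x1 + b * (x - x1) <= T x).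
  { intros x1 x b Hx Hb.
    assert (T x1 - b * x1 <= T x - b * x).
    { apply (deriv_nonneg_mono (fun y => T y - b * y) (fun y => W y - b)). lra.
      intros y Hy. apply isd_ml. apply Hder; lra.
      intros y Hy. specialize (Hb y Hy). lra. }
    lra. }
  assert (A2 : forall e, 0 < e -> exists M, forall x, M < x -> Rabs (T x - 1) < e).
  { intros e He. destruct (classic (exists x0, 0 <= x0 /\ 1 - e < T x0)) as [[x0 [Hx0 Hx0']]|Hn].
    - exists x0. intros x Hx. pose proof (Tmono x0 x ltac:(lra)). pose proof (Hgood x ltac:(lra)).
      rewrite Rabs_left by lra. lra.
    - exfalso.
      assert (Hle : forall x, 0 <= x -> T x <= 1 - e) by (intros x Hx; apply Rnot_lt_le; intros Hlt; apply Hn; exists x; auto).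
      pose proof (Hle 0 ltac:(lra)).
      destruct (continuity_ab_min P (T 0) (1 - e)) as [mx [Hmx Hmxr]]. lra. intros; apply cont_pt; auto.
      set (m := P mx). assert (Hm : 0 < m) by (apply HPpos; lra).
      assert (HPm : forall x, 0 <= x -> m <= P (T x)) by (intros x Hx; apply Hmx; split; [apply Tmono; lra| apply Hle; auto]).
      destruct (classic (exists x0, 0 <= x0 /\ W x0 < m / a)) as [[x0 [Hx0 HWx0]]|Hn2].
      + set (g := m / a - W x0). assert (Hg : 0 < g) by (unfold g; lra).
        set (x := x0 + (m / a) / (g * a)).
        assert (Hxx : x0 <= x) by (unfold x; assert (0 < (m / a) / (g * a)) by (apply Rdiv_lt_0_compat; [apply Rdiv_lt_0_compat; lra| nra]); lra).
        assert (Hphi : - ((W x0 - m / a) * exp ((- a) * x0)) <= - ((W x - m / a) * exp ((- a) * x))).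
        { apply (deriv_nonneg_mono (fun y => - ((W y - m / a) * exp ((- a) * y)))
            (fun y => - (((a * W y - P (T y)) + (- a) * (W y - m / a)) * exp ((- a) * y)))); auto.
          - intros y Hy. apply (isd_opp (fun y => (W y - m / a) * exp ((- a) * y))).
            apply (isd_mexp (fun y => W y - m / a)). apply isd_mc. apply Hder; lra.
          - intros y Hy. pose proof (HPm y ltac:(lra)). pose proof (exp_pos ((- a) * y)).
            replace (- ((a * W y - P (T y) + - a * (W y - m / a)) * exp (- a * y))) with ((P (T y) - m) * exp (- a * y)) by (field; lra).
            nra. }
        assert (Hk : W x - m / a <= - g * exp (a * (x - x0))).
        { assert (E1 : exp ((- a) * x) * exp (a * x) = 1) by (rewrite <- exp_plus; replace (- a * x + a * x) with 0 by ring; apply exp_0).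
          assert (E2 : exp ((- a) * x0) * exp (a * x) = exp (a * (x - x0))) by (rewrite <- exp_plus; f_equal; ring).
          pose proof (exp_pos (a * x)).
          assert ((W x - m / a) * exp ((- a) * x) * exp (a * x) <= (W x0 - m / a) * exp ((- a) * x0) * exp (a * x)) by (apply Rmult_le_compat_r; lra).
          rewrite Rmult_assoc, E1, Rmult_1_r, Rmult_assoc, E2 in H1. unfold g. lra. }
        assert (Hex : 1 + a * (x - x0) <= exp (a * (x - x0))) by apply exp_ineq1_le.
        assert (g * (a * (x - x0)) = m / a) by (unfold x; field; split; lra).
        pose proof (Hgood x ltac:(lra)). nra.
      + assert (HW : forall y, 0 <= y -> m / a <= W y) by (intros y Hy; apply Rnot_lt_le; intros Hlt; apply Hn2; exists y; auto).
        set (x := 2 / (m / a)). assert (Hxp : 0 < x) by (unfold x; apply Rdiv_lt_0_compat; [lra| apply Rdiv_lt_0_compat; lra]).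
        pose proof (growth 0 x (m / a) ltac:(lra) ltac:(intros; apply HW; lra)).
        replace (m / a * (x - 0)) with 2 in H0 by (unfold x; field; split; lra).
        pose proof (Hgood x ltac:(lra)). lra. }
  split; [|split]; auto.
  - intros x Hx. apply Tmono; lra.
  - intros e He.
    assert (He' : 0 < a * e / (2 * K)) by (apply Rdiv_lt_0_compat; nra).
    destruct (A2 _ He') as [M HM]. exists (Rmax M 0). intros x Hx.
    assert (HxM : M < x) by (eapply Rle_lt_trans; [apply Rmax_l| exact Hx]).
    assert (Hx0 : 0 < x) by (eapply Rle_lt_trans; [apply Rmax_r| exact Hx]).
    pose proof (Hgood x ltac:(lra)) as [Wp _]. rewrite Rminus_0_r, Rabs_right by lra.
    apply Rnot_le_lt. intros HWe.
    assert (HPs : forall y, x <= y -> P (T y) < a * e / 2).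
    { intros y Hy. specialize (HM y ltac:(lra)). pose proof (Hgood y ltac:(lra)). rewrite Rabs_left in HM by lra.
      pose proof (HPK (T y) ltac:(lra)).
      assert (K * (1 - T y) < K * (a * e / (2 * K))) by (apply Rmult_lt_compat_l; lra).
      replace (K * (a * e / (2 * K))) with (a * e / 2) in H1 by (field; lra). lra. }
    assert (HWy : forall y, x <= y -> e <= W y).
    { intros y Hy.
      assert (Hphi : (W x - e / 2) * exp ((- a) * x) <= (W y - e / 2) * exp ((- a) * y)).
      { apply (deriv_nonneg_mono (fun y => (W y - e / 2) * exp ((- a) * y))
            (fun y => (((a * W y - P (T y)) + (- a) * (W y - e / 2)) * exp ((- a) * y)))); auto.
        - intros z Hz. apply (isd_mexp (fun y => W y - e / 2)). apply isd_mc. apply Hder; lra.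
        - intros z Hz. pose proof (HPs z ltac:(lra)). pose proof (exp_pos ((- a) * z)).
          replace ((a * W z - P (T z) + - a * (W z - e / 2)) * exp (- a * z)) with ((a * e / 2 - P (T z)) * exp (- a * z)) by field.
          nra. }
      assert (E1 : exp ((- a) * y) * exp (a * y) = 1) by (rewrite <- exp_plus; replace (- a * y + a * y) with 0 by ring; apply exp_0).
      assert (E2 : exp ((- a) * x) * exp (a * y) = exp (a * (y - x))) by (rewrite <- exp_plus; f_equal; ring).
      pose proof (exp_pos (a * y)).
      assert (Hmul : (W x - e / 2) * exp ((- a) * x) * exp (a * y) <= (W y - e / 2) * exp ((- a) * y) * exp (a * y)) by (apply Rmult_le_compat_r; lra).
      rewrite (Rmult_assoc (W y - e / 2)), E1, Rmult_1_r, Rmult_assoc, E2 in Hmul.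
      assert (1 <= exp (a * (y - x))) by (pose proof (exp_ineq1_le (a * (y - x))); nra).
      nra. }
    pose proof (growth x (x + 2 / e) e ltac:(split; [lra| assert (0 < 2 / e) by (apply Rdiv_lt_0_compat; lra); lra])
                  ltac:(intros; apply HWy; lra)).
    replace (e * (x + 2 / e - x)) with 2 in H by (field; lra).
    pose proof (Tmono 0 x ltac:(lra)). pose proof (Hgood (x + 2 / e) ltac:(assert (0 < 2 / e) by (apply Rdiv_lt_0_compat; lra); lra)). lra.
Qed.

Lemma dw_nonneg (P : R -> Prop) f x l : deriv_within P f x l ->
  (forall d, 0 < d -> exists y, P y /\ y <> x /\ Rabs (y - x) < d) ->
  (forall y, P y -> y <> x -> 0 <= (f y - f x) / (y - x)) -> 0 <= l.
Proof.
  intros H Hp Hq. apply Rnot_lt_le. intros Hl.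
  destruct (proj1 (within_eps _ _ _ _) H (- l) ltac:(lra)) as [d [Hd Hd']].
  destruct (Hp d Hd) as [y [Py [Hyx Hyd]]]. specialize (Hd' y Hyd (conj Py Hyx)). specialize (Hq y Py Hyx).
  apply Rabs_def2 in Hd'. lra.
Qed.

Lemma dw_nonpos (P : R -> Prop) f x l : deriv_within P f x l ->
  (forall d, 0 < d -> exists y, P y /\ y <> x /\ Rabs (y - x) < d) ->
  (forall y, P y -> y <> x -> (f y - f x) / (y - x) <= 0) -> l <= 0.
Proof.
  intros H Hp Hq. apply Rnot_lt_le. intros Hl.
  destruct (proj1 (within_eps _ _ _ _) H l ltac:(lra)) as [d [Hd Hd']].
  destruct (Hp d Hd) as [y [Py [Hyx Hyd]]]. specialize (Hd' y Hyd (conj Py Hyx)). specialize (Hq y Py Hyx).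
  apply Rabs_def2 in Hd'. lra.
Qed.

Lemma pts_left d : 0 < d -> exists y, y <= 0 /\ y <> 0 /\ Rabs (y - 0) < d.
Proof. intros. exists (- d / 2). split. lra. split. lra. rewrite Rabs_left; lra. Qed.
Lemma pts_right d : 0 < d -> exists y, 0 <= y /\ y <> 0 /\ Rabs (y - 0) < d.
Proof. intros. exists (d / 2). split. lra. split. lra. rewrite Rabs_right; lra. Qed.

Lemma neg_der (P : R -> Prop) f x l : x < 0 -> (forall y, y < 0 -> P y) -> deriv_within P f x l -> is_derive f x l.
Proof. intros Hx HP. apply dw_derive. exists (- x). split. lra. intros y Hy. apply HP. apply Rabs_def2 in Hy. lra. Qed.
Lemma pos_der (P : R -> Prop) f x l : 0 < x -> (forall y, 0 < y -> P y) -> deriv_within P f x l -> is_derive f x l.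
Proof. intros Hx HP. apply dw_derive. exists x. split. lra. intros y Hy. apply HP. apply Rabs_def2 in Hy. lra. Qed.

Lemma div_np a b : a <= 0 -> 0 < b -> a / b <= 0.
Proof. intros. unfold Rdiv. pose proof (Rinv_0_lt_compat b H0). nra. Qed.
Lemma div_nn a b : a <= 0 -> b < 0 -> 0 <= a / b.
Proof. intros. unfold Rdiv. pose proof (Rinv_lt_0_compat b H0). nra. Qed.
Lemma div_pp a b : 0 <= a -> 0 < b -> 0 <= a / b.
Proof. intros. unfold Rdiv. pose proof (Rinv_0_lt_compat b H0). nra. Qed.
Lemma div_pn a b : 0 <= a -> b < 0 -> a / b <= 0.
Proof. intros. unfold Rdiv. pose proof (Rinv_lt_0_compat b H0). nra. Qed.

Lemma isd_sumc (A B : R -> R) x dA dB c : is_derive A x dA -> is_derive B x dB ->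
  is_derive (fun y => A y + c * B y) x (dA + c * dB).
Proof.
  intros H1 H2. auto_derive. split. exists dA; auto. split. exists dB; auto. auto.
  replace (Derive (fun x0 : R => A x0) x) with dA by (symmetry; apply is_derive_unique; auto).
  replace (Derive (fun x0 : R => B x0) x) with dB by (symmetry; apply is_derive_unique; auto). ring.
Qed.

Lemma endpoints (eta Qg Qp : R) (Psi thetas : R -> R) (cmax c : R) (theta : R -> R) :
  0 < eta -> 0 < Qg -> - Qg < Qp -> cmax < 0 -> cmax <= c <= 0 ->
  (forall t, 0 <= t <= 1 -> 0 <= Psi t) ->
  thetas 0 = 0 -> thetas cmax = 1 ->
  solves_Pc eta Qg Qp Psi thetas c theta -> cmax < c < 0.
Proof.
  intros Heta HQg HQp Hcm Hc HPsi Hts0 Htsm [Hrange [Hcont [dl1 [dl2 [dr1 [dr2 [CL [CR [OL [OR [Lm [T0 [Lp [Ldm [Ldp Hif]]]]]]]]]]]]]]].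
  unfold Sfun in Hif.
  assert (Hr : Qp / (Qp + Qg) < 1) by (apply (Rmult_lt_reg_r (Qp + Qg)); [lra| field_simplify; lra]).
  destruct (CL 0 ltac:(lra)) as [DL0 [DDL0 _]]. destruct (CR 0 ltac:(lra)) as [DR0 [DDR0 CDR0]].
  assert (LD : forall x, x < 0 -> is_derive theta x (dl1 x) /\ is_derive dl1 x (dl2 x)).
  { intros x Hx. destruct (CL x ltac:(lra)) as [D1 [D2 _]]. split.
    apply (neg_der (fun x => x <= 0)); [exact Hx| intros; simpl; lra| exact D1].
    apply (neg_der (fun x => x <= 0)); [exact Hx| intros; simpl; lra| exact D2]. }
  assert (RD : forall x, 0 < x -> is_derive theta x (dr1 x) /\ is_derive dr1 x (dr2 x)).
  { intros x Hx. destruct (CR x ltac:(lra)) as [D1 [D2 _]]. split.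
    apply (pos_der (fun x => 0 <= x)); [exact Hx| intros; simpl; lra| exact D1].
    apply (pos_der (fun x => 0 <= x)); [exact Hx| intros; simpl; lra| exact D2]. }
  split.
  - destruct (Req_dec c cmax) as [Hceq|]; [|lra]. exfalso. subst c.
    rewrite Htsm in T0.
    assert (Hdr : dr1 0 <= 0).
    { apply (dw_nonpos _ theta 0 (dr1 0) DR0). apply pts_right. intros y Hy Hy0.
      rewrite T0. pose proof (Hrange y). apply div_np; lra. }
    set (h := fun y => dl1 y + cmax * theta y).
    assert (hc : forall x y, x <= y < 0 -> h x = h y).
    { intros x y Hxy. apply (deriv_zero_const h (fun y => dl2 y + cmax * dl1 y)). lra.
      intros z Hz. destruct (LD z ltac:(lra)). apply isd_sumc; auto.
      intros z Hz. apply OL. lra. }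
    assert (h0 : forall y, y < 0 -> h y = 0).
    { intros y Hy. apply Rabs_eq_0. apply Rle_antisym; [|apply Rabs_pos]. apply le_epsilon. intros e He. rewrite Rplus_0_l.
      assert (He2 : 0 < e / (2 * (Rabs cmax + 1))) by (apply Rdiv_lt_0_compat; [lra| pose proof (Rabs_pos cmax); lra]).
      destruct (proj1 (minf_eps _ _) Lm _ He2) as [M1 HM1].
      destruct (proj1 (minf_eps _ _) Ldm _ He2) as [M2 HM2].
      set (x := Rmin y (Rmin M1 M2) - 1).
      assert (x < M1 /\ x < M2 /\ x <= y) by (unfold x; pose proof (Rmin_l y (Rmin M1 M2)); pose proof (Rmin_r y (Rmin M1 M2)); pose proof (Rmin_l M1 M2); pose proof (Rmin_r M1 M2); lra).
      rewrite <- (hc x y) by lra. unfold h. specialize (HM1 x ltac:(lra)). specialize (HM2 x ltac:(lra)).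
      rewrite Rminus_0_r in HM1, HM2.
      eapply Rle_trans. apply Rabs_triang. rewrite Rabs_mult.
      assert (Rabs cmax * Rabs (theta x) <= (Rabs cmax + 1) * (e / (2 * (Rabs cmax + 1)))).
      { apply Rmult_le_compat. apply Rabs_pos. apply Rabs_pos. lra. lra. }
      replace ((Rabs cmax + 1) * (e / (2 * (Rabs cmax + 1)))) with (e / 2) in H0 by (field; pose proof (Rabs_pos cmax); lra).
      assert (e / (2 * (Rabs cmax + 1)) <= e / 2).
      { unfold Rdiv. apply Rmult_le_compat_l. lra. apply Rinv_le_contravar. lra. pose proof (Rabs_pos cmax); lra. }
      lra. }
    assert (Hdl : dl1 0 = - cmax).
    { assert (C1 := dw_cont _ _ _ _ DL0). assert (C2 := dw_cont _ _ _ _ DDL0).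
      destruct (CL 0 ltac:(lra)) as [_ [_ _]].
      assert (Hh : h 0 = 0).
      { apply Rabs_eq_0. apply Rle_antisym; [|apply Rabs_pos]. apply le_epsilon. intros e He. rewrite Rplus_0_l.
        assert (He2 : 0 < e / (2 * (Rabs cmax + 1))) by (apply Rdiv_lt_0_compat; [lra| pose proof (Rabs_pos cmax); lra]).
        assert (Ct : cont_within (fun x => x <= 0) theta 0) by (eapply dw_cont; eauto).
        destruct (proj1 (within_eps _ _ _ _) Ct _ He2) as [d1 [Hd1 H1]].
        destruct (proj1 (within_eps _ _ _ _) C2 _ He2) as [d2 [Hd2 H2]].
        set (y := - Rmin d1 d2 / 2).
        assert (y < 0 /\ Rabs (y - 0) < d1 /\ Rabs (y - 0) < d2) by (unfold y; pose proof (Rmin_l d1 d2); pose proof (Rmin_r d1 d2); pose proof (Rmin_pos d1 d2 Hd1 Hd2); rewrite Rabs_left; lra).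
        destruct H as [Hy [Hy1 Hy2]]. specialize (H1 y Hy1 ltac:(lra)). specialize (H2 y Hy2 ltac:(lra)).
        pose proof (h0 y Hy). unfold h in H |- *.
        replace (dl1 0 + cmax * theta 0) with (-(dl1 y - dl1 0) - cmax * (theta y - theta 0) + (dl1 y + cmax * theta y)) by ring.
        rewrite H, Rplus_0_r. eapply Rle_trans. apply Rabs_triang. rewrite Rabs_Ropp, Rabs_Ropp, Rabs_mult.
        assert (Rabs cmax * Rabs (theta y - theta 0) <= (Rabs cmax + 1) * (e / (2 * (Rabs cmax + 1)))).
        { apply Rmult_le_compat. apply Rabs_pos. apply Rabs_pos. lra. lra. }
        replace ((Rabs cmax + 1) * (e / (2 * (Rabs cmax + 1)))) with (e / 2) in H0 by (field; pose proof (Rabs_pos cmax); lra).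
        assert (e / (2 * (Rabs cmax + 1)) <= e / 2).
        { unfold Rdiv. apply Rmult_le_compat_l. lra. apply Rinv_le_contravar. lra. pose proof (Rabs_pos cmax); lra. }
        lra. }
      unfold h in Hh. rewrite T0 in Hh. lra. }
    rewrite Hdl in Hif.
    assert (dr1 0 = eta * cmax * (Qp / (Qp + Qg) - 1)) by lra.
    assert (0 < eta * cmax * (Qp / (Qp + Qg) - 1)).
    { replace (eta * cmax * (Qp / (Qp + Qg) - 1)) with (eta * ((- cmax) * (1 - Qp / (Qp + Qg)))) by ring.
      apply Rmult_lt_0_compat. lra. apply Rmult_lt_0_compat; lra. }
    lra.
  - destruct (Req_dec c 0) as [Hceq|]; [|lra]. exfalso. subst c.
    rewrite Hts0 in T0.
    assert (Hdl : dl1 0 <= 0).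
    { apply (dw_nonpos _ theta 0 (dl1 0) DL0). apply pts_left. intros y Hy Hy0.
      rewrite T0. pose proof (Hrange y). apply div_pn; lra. }
    assert (Hdr : 0 <= dr1 0).
    { apply (dw_nonneg _ theta 0 (dr1 0) DR0). apply pts_right. intros y Hy Hy0.
      rewrite T0. pose proof (Hrange y). apply div_pp; lra. }
    assert (Hdr0 : dr1 0 = 0) by nra.
    assert (Cr := dw_cont _ _ _ _ DDR0).
    assert (Ct : cont_within (fun x => 0 <= x) theta 0) by (eapply dw_cont; eauto).
    assert (mono : forall x y, 0 < x <= y -> dr1 y <= dr1 x).
    { intros x y Hxy.
      assert (- dr1 x <= - dr1 y); [|lra].
      apply (deriv_nonneg_mono (fun z => - dr1 z) (fun z => - dr2 z)). lra.
      intros z Hz. apply (is_derive_opp dr1 z (dr2 z)). apply RD; lra.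
      intros z Hz. specialize (OR z ltac:(lra)). pose proof (HPsi (theta z) (Hrange z)). lra. }
    assert (S1 : forall x, 0 < x -> dr1 x <= 0).
    { intros x Hx. apply Rnot_lt_le. intros Hp.
      destruct (proj1 (within_eps _ _ _ _) Cr _ Hp) as [d [Hd H1]].
      set (y := Rmin d x / 2).
      assert (0 < y <= x /\ Rabs (y - 0) < d) by (unfold y; pose proof (Rmin_l d x); pose proof (Rmin_r d x); pose proof (Rmin_pos d x Hd Hx); rewrite Rabs_right; lra).
      destruct H as [Hy1 Hy2]. specialize (H1 y Hy2 ltac:(lra)). apply Rabs_def2 in H1.
      pose proof (mono y x Hy1). lra. }
    assert (S2 : forall x, 0 < x -> theta x <= 0).
    { intros x Hx. apply Rnot_lt_le. intros Hp.
      destruct (proj1 (within_eps _ _ _ _) Ct _ Hp) as [d [Hd H1]].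
      set (y := Rmin d x / 2).
      assert (0 < y <= x /\ Rabs (y - 0) < d) by (unfold y; pose proof (Rmin_l d x); pose proof (Rmin_r d x); pose proof (Rmin_pos d x Hd Hx); rewrite Rabs_right; lra).
      destruct H as [Hy1 Hy2]. specialize (H1 y Hy2 ltac:(lra)). apply Rabs_def2 in H1.
      assert (- theta y <= - theta x).
      { apply (deriv_nonneg_mono (fun z => - theta z) (fun z => - dr1 z)). lra.
        intros z Hz. apply (is_derive_opp theta z (dr1 z)). apply RD; lra.
        intros z Hz. pose proof (S1 z ltac:(lra)). lra. }
      lra. }
    destruct (proj1 (pinf_eps _ _) Lp (1/2) ltac:(lra)) as [M HM].
    specialize (HM (Rmax M 0 + 1) ltac:(pose proof (Rmax_l M 0); lra)).
    pose proof (S2 (Rmax M 0 + 1) ltac:(pose proof (Rmax_r M 0); lra)). apply Rabs_def2 in HM. lra.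
Qed.

Lemma dw_of_derive (P : R -> Prop) (f g : R -> R) x l : (forall y, P y -> f y = g y) -> P x ->
  is_derive g x l -> deriv_within P f x l.
Proof.
  intros Hfg Px H. apply is_derive_Reals in H. apply within_eps. intros e He.
  destruct (H e He) as [d Hd]. exists d. split. apply cond_pos. intros y Hy [Py Hyx].
  assert (Hh : y - x <> 0) by lra.
  specialize (Hd (y - x) Hh Hy). replace (x + (y - x)) with y in Hd by ring.
  rewrite (Hfg y Py), (Hfg x Px). exact Hd.
Qed.

Lemma cw_of_cont (P : R -> Prop) (f g : R -> R) x : (forall y, P y -> f y = g y) -> P x ->
  continuous g x -> cont_within P f x.
Proof.
  intros Hfg Px H. apply within_eps. intros e He.
  destruct (proj1 (cont_eps _ _) H e He) as [d [Hd Hd']]. exists d. split; auto.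
  intros y Hy Py. rewrite (Hfg y Py), (Hfg x Px). auto.
Qed.

Lemma pw_cont (F G : R -> R) x : (forall y, continuous F y) -> (forall y, continuous G y) -> F 0 = G 0 ->
  continuous (fun y => if Rle_dec y 0 then F y else G y) x.
Proof.
  intros CF CG H0. apply cont_eps. intros e He.
  destruct (proj1 (cont_eps _ _) (CF x) e He) as [d1 [Hd1 H1]].
  destruct (proj1 (cont_eps _ _) (CG x) e He) as [d2 [Hd2 H2]].
  destruct (proj1 (cont_eps _ _) (CF 0) e He) as [d3 [Hd3 H3]].
  destruct (proj1 (cont_eps _ _) (CG 0) e He) as [d4 [Hd4 H4]].
  destruct (Rtotal_order x 0) as [Hx|[Hx|Hx]].
  - exists (Rmin d1 (- x)). split. apply Rmin_pos; lra. intros y Hy.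
    pose proof (Rmin_l d1 (-x)). pose proof (Rmin_r d1 (-x)). apply Rabs_def2 in Hy as Hy'.
    destruct (Rle_dec y 0); [|lra]. destruct (Rle_dec x 0); [|lra]. apply H1. lra.
  - subst x. exists (Rmin d3 d4). split. apply Rmin_pos; lra. intros y Hy.
    pose proof (Rmin_l d3 d4). pose proof (Rmin_r d3 d4).
    destruct (Rle_dec 0 0); [|lra]. destruct (Rle_dec y 0). apply H3. lra. rewrite H0. apply H4. lra.
  - exists (Rmin d2 x). split. apply Rmin_pos; lra. intros y Hy.
    pose proof (Rmin_l d2 x). pose proof (Rmin_r d2 x). apply Rabs_def2 in Hy as Hy'.
    destruct (Rle_dec y 0); [lra|]. destruct (Rle_dec x 0); [lra|]. apply H2. lra.
Qed.

Lemma exp_small (K0 k e : R) : 0 < K0 -> 0 < k -> 0 < e -> exists M, forall x, x < M -> K0 * exp (k * x) < e.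
Proof.
  intros HK Hk He. exists (ln (e / K0) / k). intros x Hx.
  assert (k * x < ln (e / K0)).
  { apply (Rmult_lt_compat_l k) in Hx; auto. replace (k * (ln (e / K0) / k)) with (ln (e / K0)) in Hx by (field; lra). auto. }
  apply exp_increasing in H. rewrite exp_ln in H by (apply Rdiv_lt_0_compat; lra).
  apply (Rmult_lt_compat_l K0) in H; auto. replace (K0 * (e / K0)) with e in H by (field; lra). auto.
Qed.

Theorem proposition6
  (eta Qg Qp cmax : R) (Psi thetas : R -> R)
  (Heta : 0 < eta) (HQg : 0 < Qg) (HQp : - Qg < Qp)
  (HPsi_smooth : Cinf_on (fun t => 0 <= t <= 1) Psi)
  (HPsi_nonneg : forall t, 0 <= t <= 1 -> 0 <= Psi t)
  (HPsi_pos : forall t, 0 <= t < 1 -> 0 < Psi t)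
  (HPsi_1 : Psi 1 = 0)
  (Hcmax : cmax < 0)
  (Hts_range : forall c, cmax <= c <= 0 -> 0 <= thetas c <= 1)
  (Hts_cont : forall c, cmax <= c <= 0 ->
                cont_within (fun y => cmax <= y <= 0) thetas c)
  (Hts_decr : forall c1 c2, cmax <= c1 -> c1 < c2 -> c2 <= 0 ->
                thetas c2 < thetas c1)
  (Hts_0 : thetas 0 = 0)
  (Hts_cmax : thetas cmax = 1)
  (Hts_smooth : Cinf_on (fun y => cmax <= y < 0) thetas)
  (Hts_deriv_neg : forall c l, cmax <= c < 0 ->
                deriv_within (fun y => cmax <= y < 0) thetas c l -> l < 0) :
  (exists c, cmax <= c <= 0 /\
     exists theta, solves_Pc eta Qg Qp Psi thetas c theta) /\
  (forall c, cmax <= c <= 0 ->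
     (exists theta, solves_Pc eta Qg Qp Psi thetas c theta) ->
     cmax < c < 0).
Proof.
  split; [| intros c Hc [theta Hth]; apply (endpoints eta Qg Qp Psi thetas cmax c theta); auto].
  destruct HPsi_smooth as [Dp [HD0 HD]].
  destruct (lip_C2 (Dp 0%nat) (Dp 1%nat) (Dp 2%nat)) as [K [HK HKl]].
  { intros; apply HD; auto. } { intros; apply HD; auto. }
  set (Pe := fun t => Psi (c01 t)).
  assert (HPe_lip : forall s t, Rabs (Pe s - Pe t) <= K * Rabs (s - t)).
  { intros s t. unfold Pe. rewrite <- (HD0 (c01 s)), <- (HD0 (c01 t)) by apply c01_range. apply HKl. }
  assert (HPe_eq : forall t, 0 <= t <= 1 -> Pe t = Psi t) by (intros; unfold Pe; rewrite c01_id; auto).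
  assert (HPe_cont : forall x, continuous Pe x).
  { intros x. apply cont_eps. intros e He. exists (e / K). split. apply Rdiv_lt_0_compat; lra.
    intros y Hy. eapply Rle_lt_trans. apply HPe_lip. apply (Rmult_lt_compat_l K) in Hy; auto.
    replace (K * (e / K)) with e in Hy by (field; lra). auto. }
  assert (HPe_pos : forall t, t < 1 -> 0 < Pe t).
  { intros t Ht. unfold Pe. apply HPsi_pos. pose proof (c01_range t). split. lra.
    unfold c01, Rmax, Rmin. repeat destruct Rle_dec; lra. }
  assert (HPe_K : forall t, t <= 1 -> Pe t <= K * (1 - t)).
  { intros t Ht. assert (Pe 1 = 0) by (rewrite HPe_eq; auto; lra).
    pose proof (HPe_lip t 1). rewrite H in H0. rewrite Rminus_0_r in H0. rewrite (Rabs_left1 (t - 1)) in H0 by lra.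
    pose proof (Rle_abs (Pe t)). lra. }
  set (r := Qp / (Qp + Qg)).
  assert (Hr : r < 1) by (unfold r; apply (Rmult_lt_reg_r (Qp + Qg)); [lra| field_simplify; lra]).
  set (kc := fun c => Rmax cmax (Rmin c 0)).
  assert (Hkc_r : forall c, cmax <= kc c <= 0) by (intros; unfold kc, Rmax, Rmin; repeat destruct Rle_dec; lra).
  assert (Hkc_id : forall c, cmax <= c <= 0 -> kc c = c) by (intros; unfold kc, Rmax, Rmin; repeat destruct Rle_dec; lra).
  set (ac := fun c => - eta * kc c).
  set (ts := fun c => thetas (kc c)).
  set (f := fun (th v : R) => v).
  set (g := fun c (th v : R) => ac c * v - Pe th).
  set (L := 1 + eta * (- cmax) + K).
  assert (HL : 0 < L) by (unfold L; nra).
  assert (Hlip : forall c, Lip f (g c) L).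
  { intros c a b a' b'. unfold f, g, L.
    replace (ac c * b - Pe a - (ac c * b' - Pe a')) with (ac c * (b - b') - (Pe a - Pe a')) by ring.
    pose proof (Rabs_triang (ac c * (b - b')) (- (Pe a - Pe a'))). rewrite Rabs_Ropp in H.
    change (ac c * (b - b') - (Pe a - Pe a')) with (ac c * (b - b') + - (Pe a - Pe a')).
    rewrite Rabs_mult in H. pose proof (HPe_lip a a').
    assert (Rabs (ac c) <= eta * (- cmax)) by (unfold ac; pose proof (Hkc_r c); rewrite Rabs_right by nra; nra).
    pose proof (Rabs_pos (b - b')). pose proof (Rabs_pos (a - a')). pose proof (Rabs_pos (ac c)). nra. }
  set (b0 := fun c => ac c * (ts c - r)).
  set (Th := fun c => TH f (g c) (ts c) (b0 c)).
  set (V := fun c => VV f (g c) (ts c) (b0 c)).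
  assert (Hode : forall c, Th c 0 = ts c /\ V c 0 = b0 c /\
     (forall x, is_derive (Th c) x (f (Th c (cl x)) (V c (cl x)))) /\
     (forall x, is_derive (V c) x (g c (Th c (cl x)) (V c (cl x)))) /\
     (forall x, Th c x = ts c + RInt (fun t => f (Th c (cl t)) (V c (cl t))) 0 x) /\
     (forall x, V c x = b0 c + RInt (fun t => g c (Th c (cl t)) (V c (cl t))) 0 x))
    by (intros c; apply (ode_exists f (g c) L); auto).
  assert (HM : Model cmax r K ac ts Pe Th V).
  { unfold Model.
    split; [lra|]. split; [exact Hr|]. split; [exact HK|]. split; [exact HPe_cont|]. split; [exact HPe_pos|].
    split; [exact HPe_K|].
    split. { unfold ts. rewrite Hkc_id by lra. auto. }
    split. { unfold ts. rewrite Hkc_id by lra. auto. }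
    split. { intros c Hc. unfold ts. rewrite Hkc_id by lra. split. apply Hts_range; lra.
             rewrite <- Hts_cmax. apply Hts_decr; lra. }
    split. { unfold ac. rewrite Hkc_id by lra. ring. }
    split. { intros c Hc. unfold ac. rewrite Hkc_id by lra. nra. }
    split. { intros c Hc. destruct (Hode c) as [E1 [E2 _]]. split; auto. }
    split. { intros c x Hc Hx. destruct (Hode c) as [_ [_ [D1 [D2 _]]]]. split.
             - replace (V c x) with (f (Th c (cl x)) (V c (cl x))) by (unfold f; rewrite cl_pos; auto). apply D1.
             - replace (ac c * V c x - Pe (Th c x)) with (g c (Th c (cl x)) (V c (cl x))) by (unfold g; rewrite cl_pos; auto). apply D2. }
    split. { intros c x Hc. destruct (Hode c) as [_ [_ [D1 [D2 _]]]]. split; eapply derive_cont; eauto. }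
    intros c0 Hc0 X e HX He.
    assert (CT : forall c x, continuous (Th c) x /\ continuous (V c) x)
      by (intros c x; destruct (Hode c) as [_ [_ [D1 [D2 _]]]]; split; eapply derive_cont; eauto).
    destruct (continuity_ab_maj (fun x => Rabs (V c0 x)) 0 X HX) as [xm [Hxm _]].
    { intros; apply cont_pt; apply cabs; apply CT. }
    set (Vm := Rabs (V c0 xm)). assert (HVm : 0 <= Vm) by apply Rabs_pos.
    set (EL := exp (L * X)). assert (HEL : 0 < EL) by apply exp_pos.
    set (A := eta * (- cmax)). assert (HA : 0 <= A) by (unfold A; nra).
    set (B0 := Rabs (ts c0 - r)). assert (HB0 : 0 <= B0) by apply Rabs_pos.
    set (C2 := eta * (B0 + Vm * X)). assert (HC2 : 0 <= C2) by (unfold C2; apply Rmult_le_pos; [lra| nra]).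
    set (q := e / (2 * EL)). assert (Hq : 0 < q) by (unfold q; apply Rdiv_lt_0_compat; lra).
    assert (Hq1 : 0 < q / (1 + A)) by (apply Rdiv_lt_0_compat; lra).
    destruct (proj1 (within_eps _ _ _ _) (Hts_cont c0 Hc0) _ Hq1) as [d1 [Hd1 H1]].
    assert (Hq2 : 0 < q / (C2 + 1)) by (apply Rdiv_lt_0_compat; lra).
    exists (Rmin d1 (q / (C2 + 1))). split. apply Rmin_pos; auto.
    intros c Hc Hcd x Hx.
    assert (Hcd1 : Rabs (c - c0) < d1) by (eapply Rlt_le_trans; [exact Hcd| apply Rmin_l]).
    assert (Hcd2 : Rabs (c - c0) < q / (C2 + 1)) by (eapply Rlt_le_trans; [exact Hcd| apply Rmin_r]).
    assert (Hdts : Rabs (ts c - ts c0) < q / (1 + A)) by (unfold ts; rewrite !Hkc_id by lra; apply H1; auto).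
    assert (Hda : Rabs (ac c - ac c0) = eta * Rabs (c - c0)).
    { unfold ac. rewrite !Hkc_id by lra. replace (- eta * c - - eta * c0) with (- eta * (c - c0)) by ring.
      rewrite Rabs_mult, Rabs_left by lra. ring. }
    assert (HE0 : 0 <= Rabs (ac c - ac c0) * Vm) by (apply Rmult_le_pos; auto; apply Rabs_pos).
    destruct (Hode c) as [_ [_ [_ [_ [I1 J1]]]]]. destruct (Hode c0) as [_ [_ [_ [_ [I2 J2]]]]].
    assert (Gr := gronwall f (g c) f (g c0) L (ts c) (b0 c) (ts c0) (b0 c0) (Rabs (ac c - ac c0) * Vm) X
                  (Th c) (V c) (Th c0) (V c0) HL (Hlip c) (Hlip c0) HX HE0
                  (fun x => proj1 (CT c x)) (fun x => proj2 (CT c x)) (fun x => proj1 (CT c0 x)) (fun x => proj2 (CT c0 x))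
                  I1 J1 I2 J2).
    assert (Gr' := Gr ltac:(intros t Ht; unfold f, g;
        replace (ac c * V c0 t - Pe (Th c0 t) - (ac c0 * V c0 t - Pe (Th c0 t))) with ((ac c - ac c0) * V c0 t) by ring;
        rewrite Rminus_diag, Rabs_R0, Rplus_0_l, Rabs_mult; apply Rmult_le_compat_l; [apply Rabs_pos| apply Hxm; auto]) x Hx).
    fold EL in Gr'.
    assert (Hb : Rabs (b0 c - b0 c0) <= A * Rabs (ts c - ts c0) + Rabs (ac c - ac c0) * B0).
    { unfold b0. replace (ac c * (ts c - r) - ac c0 * (ts c0 - r)) with (ac c * (ts c - ts c0) + (ac c - ac c0) * (ts c0 - r)) by ring.
      eapply Rle_trans. apply Rabs_triang. rewrite !Rabs_mult. fold B0. apply Rplus_le_compat_r. apply Rmult_le_compat_r. apply Rabs_pos.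
      unfold ac, A. pose proof (Hkc_r c). rewrite Rabs_right by nra. nra. }
    assert (Hin : Rabs (ts c - ts c0) + Rabs (b0 c - b0 c0) + Rabs (ac c - ac c0) * Vm * X < 2 * q).
    { rewrite Hda in *. pose proof (Rabs_pos (ts c - ts c0)). pose proof (Rabs_pos (c - c0)).
      assert ((1 + A) * Rabs (ts c - ts c0) < q).
      { apply (Rmult_lt_compat_l (1 + A)) in Hdts; [|lra]. replace ((1 + A) * (q / (1 + A))) with q in Hdts by (field; lra). lra. }
      assert ((C2 + 1) * Rabs (c - c0) < q).
      { apply (Rmult_lt_compat_l (C2 + 1)) in Hcd2; [|lra]. replace ((C2 + 1) * (q / (C2 + 1))) with q in Hcd2 by (field; lra). lra. }
      assert (eta * Rabs (c - c0) * B0 + eta * Rabs (c - c0) * Vm * X = C2 * Rabs (c - c0)) by (unfold C2; ring).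
      nra. }
    assert (2 * q * EL = e) by (unfold q; field; lra).
    nra. }
  destruct (shoot cmax r K ac ts Pe Th V HM) as [c [Hc Hgood]].
  assert (Hc' : cmax <= c <= 0) by lra.
  assert (Hkc : kc c = c) by (apply Hkc_id; lra).
  assert (Hac : ac c = - eta * c) by (unfold ac; rewrite Hkc; ring).
  assert (Hts : ts c = thetas c) by (unfold ts; rewrite Hkc; auto).
  destruct (Hode c) as [HT0 [HV0 [D1 [D2 _]]]].
  assert (Hder : forall x, 0 <= x -> is_derive (Th c) x (V c x) /\ is_derive (V c) x (ac c * V c x - Pe (Th c x))).
  { intros x Hx. split.
    - replace (V c x) with (f (Th c (cl x)) (V c (cl x))) by (unfold f; rewrite cl_pos; auto). apply D1.
    - replace (ac c * V c x - Pe (Th c x)) with (g c (Th c (cl x)) (V c (cl x))) by (unfold g; rewrite cl_pos; auto). apply D2. }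
  assert (CT : forall x, continuous (Th c) x) by (intros x; eapply derive_cont; apply D1).
  assert (CV : forall x, continuous (V c) x) by (intros x; eapply derive_cont; apply D2).
  set (s := thetas c).
  assert (Hs : 0 <= s <= 1) by (apply Hts_range; lra).
  assert (HTs : Th c 0 = s) by (rewrite HT0; auto).
  destruct (asym (ac c) Pe K (Th c) (V c)) as [Tmono [LT LV]]; auto.
  { rewrite Hac. nra. } { rewrite HTs; lra. }
  exists c. split; [lra|].
  exists (fun x => if Rle_dec x 0 then s * exp ((- c) * x) else Th c x).
  unfold solves_Pc. split; [|split].
  - intros x. destruct (Rle_dec x 0).
    + assert (exp ((- c) * x) <= 1) by (rewrite <- exp_0; destruct (Req_dec x 0); [subst; rewrite Rmult_0_r; lra| left; apply exp_increasing; nra]).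
      pose proof (exp_pos ((- c) * x)). split; nra.
    + pose proof (Tmono x ltac:(lra)). pose proof (Hgood x ltac:(lra)). lra.
  - intros x. apply pw_cont; auto.
    + intros y. apply cmult. apply cconst. apply cexp. apply cmult. apply cconst. apply cid.
    + rewrite Rmult_0_r, exp_0, Rmult_1_r. auto.
  - exists (fun x => (- c) * (s * exp ((- c) * x))), (fun x => (- c) * ((- c) * (s * exp ((- c) * x)))),
      (V c), (fun x => ac c * V c x - Pe (Th c x)).
    split; [|split; [|split; [|split; [|split; [|split; [|split; [|split; [|split]]]]]]]].
    + intros x Hx. split; [|split].
      * apply (dw_of_derive _ _ (fun y => s * exp ((- c) * y))). intros y Hy. destruct (Rle_dec y 0); [auto| simpl in Hy; lra]. auto.
        auto_derive; auto. ring.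
      * apply (dw_of_derive _ _ (fun x => (- c) * (s * exp ((- c) * x)))). auto. auto. auto_derive; auto. ring.
      * apply (cw_of_cont _ _ (fun x => (- c) * ((- c) * (s * exp ((- c) * x))))). auto. auto.
        apply cmult. apply cconst. apply cmult. apply cconst. apply cmult. apply cconst. apply cexp. apply cmult. apply cconst. apply cid.
    + intros x Hx. simpl in Hx. split; [|split].
      * apply (dw_of_derive _ _ (Th c)). intros y Hy. simpl in Hy. destruct (Rle_dec y 0); auto.
        replace y with 0 by lra. rewrite Rmult_0_r, exp_0, Rmult_1_r. auto. auto. apply Hder; auto.
      * apply (dw_of_derive _ _ (V c)). auto. auto. apply Hder; auto.
      * apply (cw_of_cont _ _ (fun x => ac c * V c x - Pe (Th c x))). auto. auto.
        apply cminus. apply cmult. apply cconst. auto. apply ccomp; auto.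
    + intros x Hx. ring.
    + intros x Hx. destruct (Rle_dec x 0); [lra|]. rewrite Hac.
      rewrite HPe_eq. ring. pose proof (Tmono x ltac:(lra)). pose proof (Hgood x ltac:(lra)). lra.
    + apply minf_eps. intros e He. destruct (exp_small (s + 1) (- c) e ltac:(lra) ltac:(lra) He) as [M HM'].
      exists (Rmin M 0). intros x Hx. pose proof (Rmin_l M 0). pose proof (Rmin_r M 0).
      destruct (Rle_dec x 0); [|lra]. specialize (HM' x ltac:(lra)). pose proof (exp_pos ((- c) * x)).
      rewrite Rminus_0_r, Rabs_right by nra. nra.
    + simpl. destruct (Rle_dec 0 0); [|lra]. rewrite Rmult_0_r, exp_0, Rmult_1_r. auto.
    + apply pinf_eps. intros e He. destruct (LT e He) as [M HM']. exists (Rmax M 0). intros x Hx.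
      pose proof (Rmax_l M 0). pose proof (Rmax_r M 0). destruct (Rle_dec x 0); [lra|]. apply HM'. lra.
    + apply minf_eps. intros e He. destruct (exp_small ((- c) * (s + 1)) (- c) e ltac:(nra) ltac:(lra) He) as [M HM'].
      exists M. intros x Hx. specialize (HM' x Hx). pose proof (exp_pos ((- c) * x)).
      assert (HcE : 0 < (- c) * exp ((- c) * x)) by (apply Rmult_lt_0_compat; lra).
      replace ((- c) * (s * exp ((- c) * x))) with (((- c) * exp ((- c) * x)) * s) by ring.
      replace ((- c) * (s + 1) * exp ((- c) * x)) with (((- c) * exp ((- c) * x)) * (s + 1)) in HM' by ring.
      rewrite Rminus_0_r, Rabs_right by nra. nra.
    + apply pinf_eps. auto.
    + unfold Sfun. rewrite HV0. unfold b0. rewrite Hac, Hts. fold s. rewrite Rmult_0_r, exp_0. unfold r. ring.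
Qed.
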